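(* Let $\gamma(t)=\Phi(e^{it})$ be an analytic Jordan curve and $k\in\{0,1,2,\dots\}\cup\{\infty\}$. Then the set of $f\in C^k(\gamma^* )$ that are nowhere real analytic on $\gamma^*$ (i.e. real analytic at no point $\gamma(t_0)$, $t_0\in\mathbb{R}$) is a dense $G_\delta$ subset of $C^k(\gamma^* )$.
   Context: An analytic Jordan curve is $\gamma(t)=\Phi(e^{it})$, $t\in\mathbb{R}$, with $\Phi$ injective holomorphic on an annulus $\{\rho<|z|<R\}$, $0<\rho<1<R$; $\gamma^*$ is its image. $C^k(\gamma^* )$ is the space of $u:\gamma^*\to\mathbb{C}$ such that $\theta\mapsto u(\gamma(\theta))$ is $k$ times continuously differentiable on $\mathbb{R}$, with seminorms $\sup_{\theta\in\mathbb{R}}|\frac{d^l}{d\theta^l}u(\gamma(\theta))|$, integers $0\le l\le k$. A function $f:\gamma^*\to\mathbb{C}$ is real analytic at $\gamma(t_0)$ if there is a power series $\sum_{n\ge0}a_n(t-t_0)^n$ with radius of convergence $\delta>0$ such that $f(\gamma(t))=\sum_{n\ge0}a_n(t-t_0)^n$ for all $t\in(t_0-\delta,t_0+\delta)$. *)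

(* Defs.v *)
From Stdlib Require Import Reals.
Open Scope R_scope.

Definition Cx := (R * R)%type.
Definition Cadd (z w : Cx) : Cx := (fst z + fst w, snd z + snd w).
Definition Csub (z w : Cx) : Cx := (fst z - fst w, snd z - snd w).
Definition Cmul (z w : Cx) : Cx :=
  (fst z * fst w - snd z * snd w, fst z * snd w + snd z * fst w).
Definition Cnorm (z : Cx) : R := sqrt (fst z * fst z + snd z * snd z).
Definition Cexpi (t : R) : Cx := (cos t, sin t).

Definition in_annulus (rho Rr : R) (z : Cx) : Prop := rho < Cnorm z < Rr.

Definition holomorphic_on_annulus (Phi : Cx -> Cx) (rho Rr : R) : Prop :=
  forall z, in_annulus rho Rr z ->
    exists w : Cx, forall eps, 0 < eps -> exists delta, 0 < delta /\
      forall h : Cx, h <> (0,0) -> Cnorm h < delta ->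
        Cnorm (Csub (Csub (Phi (Cadd z h)) (Phi z)) (Cmul w h)) <= eps * Cnorm h.

Definition injective_on_annulus (Phi : Cx -> Cx) (rho Rr : R) : Prop :=
  forall z1 z2, in_annulus rho Rr z1 -> in_annulus rho Rr z2 ->
    Phi z1 = Phi z2 -> z1 = z2.

Definition gamma (Phi : Cx -> Cx) (t : R) : Cx := Phi (Cexpi t).

Definition curve (Phi : Cx -> Cx) : Type := { z : Cx | exists t : R, z = gamma Phi t }.
Definition curve_pt (Phi : Cx -> Cx) (t : R) : curve Phi :=
  exist _ (gamma Phi t) (ex_intro _ t eq_refl).

Definition pullback (Phi : Cx -> Cx) (f : curve Phi -> Cx) (t : R) : Cx :=
  f (curve_pt Phi t).

Definition ck_order := option nat. (* Some k = k, None = infinity *)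
Definition le_order (j : nat) (k : ck_order) : Prop :=
  match k with Some n => (j <= n)%nat | None => True end.

Definition derivs_upto (k : ck_order) (u : R -> Cx) (D : nat -> R -> Cx) : Prop :=
  (forall t, D 0%nat t = u t) /\
  (forall j, le_order j k ->
     continuity (fun t => fst (D j t)) /\ continuity (fun t => snd (D j t))) /\
  (forall j, le_order (S j) k -> forall t,
     derivable_pt_lim (fun s => fst (D j s)) t (fst (D (S j) t)) /\
     derivable_pt_lim (fun s => snd (D j s)) t (snd (D (S j) t))).

Definition in_Ck (Phi : Cx -> Cx) (k : ck_order) (f : curve Phi -> Cx) : Prop :=
  exists D, derivs_upto k (pullback Phi f) D.

(** basic neighbourhood given by the seminorms of order j <= N (j <= k):
    sup_theta |d^j/dtheta^j (g - f)(gamma theta)| <= eps *)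
Definition Ck_close (Phi : Cx -> Cx) (k : ck_order) (N : nat) (eps : R)
    (f g : curve Phi -> Cx) : Prop :=
  exists Df Dg, derivs_upto k (pullback Phi f) Df /\
    derivs_upto k (pullback Phi g) Dg /\
    forall j, (j <= N)%nat -> le_order j k ->
      forall t, Cnorm (Csub (Dg j t) (Df j t)) <= eps.

Definition Ck_open (Phi : Cx -> Cx) (k : ck_order) (U : (curve Phi -> Cx) -> Prop) : Prop :=
  forall f, U f -> in_Ck Phi k f /\
    exists N eps, 0 < eps /\
      forall g, in_Ck Phi k g -> Ck_close Phi k N eps f g -> U g.

Definition Ck_Gdelta (Phi : Cx -> Cx) (k : ck_order) (S : (curve Phi -> Cx) -> Prop) : Prop :=
  exists U : nat -> (curve Phi -> Cx) -> Prop,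
    (forall n, Ck_open Phi k (U n)) /\ (forall f, S f <-> forall n, U n f).

Definition Ck_dense (Phi : Cx -> Cx) (k : ck_order) (S : (curve Phi -> Cx) -> Prop) : Prop :=
  forall f, in_Ck Phi k f -> forall N eps, 0 < eps ->
    exists g, S g /\ in_Ck Phi k g /\ Ck_close Phi k N eps f g.

Definition real_analytic_at (Phi : Cx -> Cx) (f : curve Phi -> Cx) (t0 : R) : Prop :=
  exists (a : nat -> Cx) (delta : R), 0 < delta /\
    forall t, t0 - delta < t < t0 + delta ->
      Pser (fun n => fst (a n)) (t - t0) (fst (pullback Phi f t)) /\
      Pser (fun n => snd (a n)) (t - t0) (snd (pullback Phi f t)).

Definition nowhere_real_analytic (Phi : Cx -> Cx) (f : curve Phi -> Cx) : Prop :=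
  forall t0 : R, ~ real_analytic_at Phi f t0.

(* Main.v *)
Require Import Defs.
From Coquelicot Require Import Coquelicot.
From Stdlib Require Import Reals Lra Lia Psatz Factorial ZArith ClassicalEpsilon Classical FunctionalExtensionality Ranalysis5 Cantor.
Open Scope R_scope.

Lemma Cnorm_ge0 z : 0 <= Cnorm z.
Proof. unfold Cnorm; apply sqrt_pos. Qed.

Lemma Cnorm_fst z : Rabs (fst z) <= Cnorm z.
Proof.
  unfold Cnorm. rewrite <- sqrt_Rsqr_abs. apply sqrt_le_1_alt.
  unfold Rsqr. nra.
Qed.

Lemma Cnorm_snd z : Rabs (snd z) <= Cnorm z.
Proof.
  unfold Cnorm. rewrite <- sqrt_Rsqr_abs. apply sqrt_le_1_alt.
  unfold Rsqr. nra.
Qed.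

Lemma Cnorm_le_sum z : Cnorm z <= Rabs (fst z) + Rabs (snd z).
Proof.
  unfold Cnorm. destruct z as [x y]; simpl.
  rewrite <- (sqrt_Rsqr (Rabs x + Rabs y)).
  2:{ pose proof (Rabs_pos x); pose proof (Rabs_pos y); lra. }
  apply sqrt_le_1_alt. unfold Rsqr.
  unfold Rabs; destruct (Rcase_abs x); destruct (Rcase_abs y); nra.
Qed.

Lemma Cnorm_triangle z w : Cnorm (Cadd z w) <= Cnorm z + Cnorm w.
Proof.
  destruct z as [x1 y1]; destruct w as [x2 y2]; unfold Cnorm, Cadd; simpl.
  set (A := x1*x1+y1*y1). set (B := x2*x2+y2*y2).
  assert (HA : 0 <= A) by (unfold A; nra). assert (HB : 0 <= B) by (unfold B; nra).
  pose proof (sqrt_pos A); pose proof (sqrt_pos B).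
  rewrite <- (sqrt_Rsqr (sqrt A + sqrt B)) by lra.
  apply sqrt_le_1_alt. unfold Rsqr.
  assert (HAB : sqrt A * sqrt B >= x1*x2+y1*y2).
  { rewrite <- sqrt_mult by lra.
    destruct (Rle_dec (x1*x2+y1*y2) 0). { pose proof (sqrt_pos (A*B)); lra. }
    rewrite <- (sqrt_Rsqr (x1*x2+y1*y2)) by lra. apply Rle_ge, sqrt_le_1_alt.
    unfold Rsqr, A, B. pose proof (Rle_0_sqr (x1*y2-x2*y1)). unfold Rsqr in H1. nra. }
  pose proof (sqrt_sqrt A HA); pose proof (sqrt_sqrt B HB).
  unfold A, B in *. nra.
Qed.

Lemma Cnorm_sub_triangle a b c :
  Cnorm (Csub a b) <= Cnorm (Csub a c) + Cnorm (Csub c b).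
Proof.
  replace (Csub a b) with (Cadd (Csub a c) (Csub c b)).
  - apply Cnorm_triangle.
  - destruct a, b, c; unfold Cadd, Csub; simpl; f_equal; ring.
Qed.

Lemma Cnorm_zero : Cnorm (0,0) = 0.
Proof. unfold Cnorm; simpl. replace (0*0+0*0) with 0 by ring. apply sqrt_0. Qed.

Definition avstep (u : nat -> R) (p : R * R) (n : nat) : R * R :=
  let a := fst p in let b := snd p in let d := (b - a) / 3 in
  if Rlt_dec (a + d) (u n) then (a, a + d) else (b - d, b).

Fixpoint aviv (u : nat -> R) (a b : R) (n : nat) : R * R :=
  match n with O => (a, b) | S n => avstep u (aviv u a b n) n end.

Lemma avstep_props u p n : fst p < snd p ->
  fst (avstep u p n) < snd (avstep u p n) /\
  fst p <= fst (avstep u p n) /\ snd (avstep u p n) <= snd p /\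
  (u n < fst (avstep u p n) \/ snd (avstep u p n) < u n).
Proof.
  destruct p as [a b]; simpl; intros H. unfold avstep; simpl.
  destruct (Rlt_dec _ _); simpl; lra.
Qed.

Lemma aviv_props u a b : a < b -> forall n,
  fst (aviv u a b n) < snd (aviv u a b n) /\
  fst (aviv u a b n) <= fst (aviv u a b (S n)) /\
  snd (aviv u a b (S n)) <= snd (aviv u a b n) /\
  (u n < fst (aviv u a b (S n)) \/ snd (aviv u a b (S n)) < u n).
Proof.
  intros Hab n.
  assert (H0 : forall n, fst (aviv u a b n) < snd (aviv u a b n)).
  { induction n0 as [|n0 IH]; [simpl; lra|]. simpl. apply avstep_props; auto. }
  split; [apply H0|]. simpl. apply avstep_props; auto.
Qed.

Lemma avoid_seq (u : nat -> R) a b : a < b -> exists x, a <= x <= b /\ forall n, x <> u n.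
Proof.
  intros Hab.
  pose proof (aviv_props u a b Hab) as P.
  assert (Hmf : forall n m, (n <= m)%nat -> fst (aviv u a b n) <= fst (aviv u a b m)).
  { intros n m Hnm; induction Hnm; [lra|]. pose proof (P m); lra. }
  assert (Hms : forall n m, (n <= m)%nat -> snd (aviv u a b m) <= snd (aviv u a b n)).
  { intros n m Hnm; induction Hnm; [lra|]. pose proof (P m); lra. }
  assert (Hfs : forall n m, fst (aviv u a b n) <= snd (aviv u a b m)).
  { intros n m. destruct (Compare_dec.le_lt_dec n m).
    - pose proof (Hmf n m l). pose proof (P m). lra.
    - pose proof (Hms m n (Nat.lt_le_incl _ _ l)). pose proof (P n). lra. }
  set (E := fun y => exists n, y = fst (aviv u a b n)).
  assert (Hb : bound E). { exists b. intros y [n ->]. pose proof (Hfs n 0%nat). simpl in H. lra. }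
  assert (Hne : exists y, E y). { exists a. exists 0%nat. reflexivity. }
  destruct (completeness E Hb Hne) as [x [Hub Hlub]].
  assert (Hin : forall n, fst (aviv u a b n) <= x <= snd (aviv u a b n)).
  { intros n; split. - apply Hub. exists n; reflexivity.
    - apply Hlub. intros y [m ->]. apply Hfs. }
  exists x. split.
  - pose proof (Hin 0%nat). simpl in H. lra.
  - intros n Heq. pose proof (Hin (S n)). pose proof (P n). subst. lra.
Qed.

Lemma Rabs_le_between x b : Rabs x <= b -> -b <= x <= b.
Proof. unfold Rabs; destruct (Rcase_abs x); intros; lra. Qed.

Definition Inf (Q : nat -> Prop) : Prop := forall J, exists j, (J <= j)%nat /\ Q j.

Lemma cluster1 (Q : R -> nat -> Prop) (y : nat -> R) b :
  (forall e e' j, 0 < e -> e <= e' -> Q e j -> Q e' j) ->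
  (forall e, 0 < e -> Inf (Q e)) -> (forall j, Rabs (y j) <= b) ->
  exists c, forall e, 0 < e -> Inf (fun j => Q e j /\ Rabs (y j - c) < e).
Proof.
  intros Hmono HQ Hy.
  set (E := fun z => forall e, 0 < e -> Inf (fun j => Q e j /\ z <= y j)).
  assert (HEb : forall z, E z -> z <= b).
  { intros z Hz. destruct (Hz 1 Rlt_0_1 0%nat) as [j [_ [_ Hj]]].
    pose proof (Hy j). apply Rabs_le_between in H. lra. }
  assert (Hne : exists z, E z).
  { exists (-b). intros e He J. destruct (HQ e He J) as [j [Hj1 Hj2]].
    exists j; split; auto; split; auto. pose proof (Hy j). apply Rabs_le_between in H. lra. }
  assert (Hb : bound E) by (exists b; intros z Hz; apply HEb; auto).
  destruct (completeness E Hb Hne) as [c [Hub Hlub]].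
  exists c. intros e He.
  assert (H1 : exists z, E z /\ c - e/2 < z).
  { apply NNPP; intros Hn.
    assert (is_upper_bound E (c - e/2)).
    { intros z Hz. destruct (Rle_dec z (c - e/2)); auto. exfalso; apply Hn; exists z; split; auto; lra. }
    apply Hlub in H. lra. }
  destruct H1 as [z [Hz Hzc]].
  assert (H2 : ~ E (c + e/2)). { intros HE. apply Hub in HE. lra. }
  unfold E in H2. apply not_all_ex_not in H2. destruct H2 as [e0 H2].
  apply imply_to_and in H2. destruct H2 as [He0 H2].
  unfold Inf in H2. apply not_all_ex_not in H2. destruct H2 as [J0 H2].
  assert (HJ0 : forall j, (J0 <= j)%nat -> Q e0 j -> y j < c + e/2).
  { intros j Hj HQj. destruct (Rlt_dec (y j) (c + e/2)); auto.
    exfalso; apply H2; exists j; repeat split; auto; lra. }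
  intros J.
  assert (He1 : 0 < Rmin e e0) by (apply Rmin_pos; auto).
  destruct (Hz _ He1 (Nat.max J J0)) as [j [Hj [HQj Hzj]]].
  exists j. split; [lia|].
  assert (Q e j) by (apply (Hmono (Rmin e e0)); auto; apply Rmin_l).
  assert (Q e0 j) by (apply (Hmono (Rmin e e0)); auto; apply Rmin_r).
  split; auto.
  assert (y j < c + e/2) by (apply HJ0; auto; lia).
  apply Rabs_def1; lra.
Qed.

Definition ext_seq (q : nat -> R) (n : nat) (c : R) : nat -> R :=
  fun i => if Nat.ltb i n then q i else c.

Definition GoodPre (x : nat -> nat -> R) (q : nat -> R) (n : nat) : Prop :=
  forall e, 0 < e -> Inf (fun j => forall i, (i < n)%nat -> Rabs (x j i - q i) < e).

Lemma GoodPre_step x B q n : (forall j n, Rabs (x j n) <= B n) -> GoodPre x q n ->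
  exists c, GoodPre x (ext_seq q n c) (S n).
Proof.
  intros HB Hq.
  destruct (cluster1 (fun e j => forall i, (i < n)%nat -> Rabs (x j i - q i) < e)
             (fun j => x j n) (B n)) as [c Hc].
  - intros e e' j He Hee' H i Hi. specialize (H i Hi). lra.
  - exact Hq.
  - intros j; apply HB.
  - exists c. intros e He J. destruct (Hc e He J) as [j [Hj [H1 H2]]].
    exists j; split; auto. intros i Hi. unfold ext_seq.
    destruct (Nat.ltb i n) eqn:E.
    + apply Nat.ltb_lt in E. auto.
    + apply Nat.ltb_ge in E. assert (i = n) by lia. subst; auto.
Qed.

Fixpoint cl_pre (x : nat -> nat -> R) (n : nat) : nat -> R :=
  match n with
  | O => fun _ => 0
  | S n => let q := cl_pre x n in
      ext_seq q n (epsilon (inhabits 0) (fun c => GoodPre x (ext_seq q n c) (S n)))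
  end.

Lemma cluster_seq (x : nat -> nat -> R) (B : nat -> R) :
  (forall j n, Rabs (x j n) <= B n) ->
  exists p : nat -> R, forall P e, 0 < e ->
    Inf (fun j => forall n, (n <= P)%nat -> Rabs (x j n - p n) < e).
Proof.
  intros HB.
  assert (HG : forall n, GoodPre x (cl_pre x n) n).
  { induction n as [|n IH].
    - intros e He J. exists J. split; auto. intros i Hi; lia.
    - simpl. apply (epsilon_spec (inhabits 0) (fun c => GoodPre x (ext_seq (cl_pre x n) n c) (S n))).
      eapply GoodPre_step; eauto. }
  assert (Hst : forall n i, (i < n)%nat -> cl_pre x (S n) i = cl_pre x n i).
  { intros n i Hi. simpl. unfold ext_seq. destruct (Nat.ltb i n) eqn:E; auto.
    apply Nat.ltb_ge in E; lia. }
  assert (Hst2 : forall i n, (i < n)%nat -> cl_pre x n i = cl_pre x (S i) i).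
  { intros i n Hi. induction Hi; auto. rewrite Hst by lia. auto. }
  exists (fun i => cl_pre x (S i) i). intros P e He J.
  destruct (HG (S P) e He J) as [j [Hj Hj2]].
  exists j; split; auto. intros n Hn. rewrite <- (Hst2 n (S P)) by lia. apply Hj2; lia.
Qed.

Lemma pow2_ge1 n : (1 <= 2 ^ n)%nat.
Proof. induction n; simpl; lia. Qed.

Lemma fact_binom (k p : nat) : (fact (k + p) <= 2 ^ (k + p) * fact k * fact p)%nat.
Proof.
  remember (k + p)%nat as n eqn:Hn. revert k p Hn.
  induction n as [|n IH]; intros k p Hn.
  - destruct k; destruct p; simpl in *; try lia.
  - destruct k as [|k].
    + simpl in Hn. subst p. simpl (fact 0). pose proof (pow2_ge1 (S n)).
      revert H. generalize (fact (S n)) (2 ^ S n). intros; nia.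
    + destruct p as [|p].
      * assert (n = k) by lia. subst n. simpl (fact 0).
        pose proof (pow2_ge1 (S k)).
        revert H. generalize (fact (S k)) (2 ^ S k). intros; nia.
      * assert (H1 := IH k (S p) ltac:(lia)).
        assert (H2 := IH (S k) p ltac:(lia)).
        change (fact (S n)) with (S n * fact n)%nat.
        change (fact (S k)) with (S k * fact k)%nat in *.
        change (fact (S p)) with (S p * fact p)%nat in *.
        change (2 ^ S n)%nat with (2 * 2 ^ n)%nat.
        assert (E : S n = (S k + S p)%nat) by lia. rewrite E.
        apply (Nat.mul_le_mono_l _ _ (S k)) in H1.
        apply (Nat.mul_le_mono_l _ _ (S p)) in H2.
        revert H1 H2. generalize (fact n) (2 ^ n) (fact k) (fact p). intros. nia.
Qed.

Lemma fact_ratio_bound (k p : nat) :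
  INR (fact (k + p)) / INR (fact k) <= INR (fact p) * 2 ^ (k + p).
Proof.
  pose proof (fact_binom k p) as H. apply le_INR in H.
  rewrite !mult_INR, pow_INR in H. replace (INR 2) with 2 in H by (simpl; lra).
  pose proof (lt_0_INR _ (lt_O_fact k)).
  apply Rmult_le_reg_r with (INR (fact k)); auto.
  unfold Rdiv. rewrite Rmult_assoc, Rinv_l by lra. rewrite Rmult_1_r.
  replace (INR (fact p) * 2 ^ (k + p) * INR (fact k)) with (2 ^ (k + p) * INR (fact k) * INR (fact p)) by ring.
  lra.
Qed.

Lemma ex_series_le_R (a b : nat -> R) : (forall n, Rabs (a n) <= b n) -> ex_series b -> ex_series a.
Proof. intros H1 H2. apply (@ex_series_le R_AbsRing R_CompleteNormedModule a b); auto. Qed.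

Lemma ex_series_scal_lR (c : R) (a : nat -> R) : ex_series a -> ex_series (fun n => c * a n).
Proof. intros H. apply (ex_series_ext (fun n => a n * c)). 2: apply ex_series_scal_r; auto. intros n; simpl; ring. Qed.


Lemma ps_term_bound (a : nat -> R) (m : R) (Ha : forall n, Rabs (a n) <= m ^ (S n)) x n : Rabs (a n * x ^ n) <= m * (m * Rabs x) ^ n.
Proof.
  rewrite Rabs_mult, <- RPow_abs, Rpow_mult_distr.
  replace (m * (m ^ n * Rabs x ^ n)) with (m ^ (S n) * Rabs x ^ n) by (simpl; ring).
  apply Rmult_le_compat_r; [apply pow_le, Rabs_pos | apply Ha].
Qed.

Lemma ps_cvdisk (a : nat -> R) (m : R) (Hm : 1 <= m) (Ha : forall n, Rabs (a n) <= m ^ (S n)) r : 0 <= r -> m * r < 1 -> CV_disk a r.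
Proof.
  intros Hr Hmr. unfold CV_disk.
  apply (ex_series_le_R _ (fun n => m * (m * r) ^ n)).
  - intros n. rewrite Rabs_Rabsolu.
    replace r with (Rabs r) at 2 by (apply Rabs_right; lra). apply (ps_term_bound a m Ha).
  - apply ex_series_scal_lR. apply ex_series_geom. rewrite Rabs_right; nra.
Qed.

Lemma ps_in_radius (a : nat -> R) (m : R) (Hm : 1 <= m) (Ha : forall n, Rabs (a n) <= m ^ (S n)) x : Rabs x < / m -> Rbar_lt (Rabs x) (CV_radius a).
Proof.
  intros Hx. set (r := (Rabs x + / m) / 2).
  assert (Hm0 : 0 < m) by lra.
  assert (Hr : CV_disk a r).
  { apply (ps_cvdisk a m Hm Ha). pose proof (Rabs_pos x). unfold r. pose proof (Rinv_0_lt_compat m Hm0). lra.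
    unfold r. apply Rmult_lt_reg_r with (/m). apply Rinv_0_lt_compat; lra.
    replace (m * ((Rabs x + / m) / 2) * / m) with ((Rabs x + / m) / 2) by (field; lra).
    rewrite Rmult_1_l. lra. }
  destruct (Lub_Rbar_correct (CV_disk a)) as [Hub _].
  specialize (Hub r Hr). unfold CV_radius.
  destruct (Lub_Rbar (CV_disk a)); simpl in *; auto; unfold r in Hub; lra.
Qed.

Lemma ps_abs_ex (a : nat -> R) (m : R) (Hm : 1 <= m) (Ha : forall n, Rabs (a n) <= m ^ (S n)) x : m * Rabs x < 1 -> ex_series (fun n => Rabs (a n * x ^ n)).
Proof.
  intros H. apply (ex_series_le_R _ (fun n => m * (m * Rabs x) ^ n)).
  - intros n. rewrite Rabs_Rabsolu. apply (ps_term_bound a m Ha).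
  - apply ex_series_scal_lR. apply ex_series_geom.
    pose proof (Rabs_pos x). rewrite Rabs_right; nra.
Qed.

Lemma ps_tail (a : nat -> R) (m : R) (Hm : 1 <= m) (Ha : forall n, Rabs (a n) <= m ^ (S n)) x r P : 0 <= r -> m * r <= / 2 -> Rabs x <= r ->
  Rabs (PSeries a x - sum_f_R0 (fun n => a n * x ^ n) P) <= 2 * m * (m * r) ^ (S P).
Proof.
  intros Hr Hmr Hx.
  assert (Hmx : m * Rabs x < 1) by nra.
  pose proof (ps_abs_ex a m Hm Ha x Hmx) as Hex.
  unfold PSeries. rewrite (Series_incr_n _ (S P)) by (lia || apply ex_series_Rabs; auto).
  simpl (Init.Nat.pred (S P)).
  replace (sum_f_R0 (fun k : nat => a k * x ^ k) P +
     Series (fun k : nat => a (S P + k)%nat * x ^ (S P + k)) -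
     sum_f_R0 (fun n : nat => a n * x ^ n) P)
    with (Series (fun k : nat => a (S P + k)%nat * x ^ (S P + k))) by ring.
  assert (Hex2 : ex_series (fun k => Rabs (a (S P + k)%nat * x ^ (S P + k)))).
  { apply (ex_series_incr_n (fun k => Rabs (a k * x ^ k)) (S P)). auto. }
  eapply Rle_trans. apply Series_Rabs; auto.
  eapply Rle_trans. apply (Series_le _ (fun k => m * (m * r) ^ (S P) * (m * r) ^ k)).
  - intros k. split. apply Rabs_pos.
    eapply Rle_trans. apply (ps_term_bound a m Ha). rewrite Rmult_assoc, <- pow_add.
    apply Rmult_le_compat_l; [lra|]. apply pow_incr. split; [apply Rmult_le_pos; [lra|apply Rabs_pos]|].
    apply Rmult_le_compat_l; lra.
  - apply ex_series_scal_lR. apply ex_series_geom. rewrite Rabs_right; nra.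
  - rewrite Series_scal_l. rewrite Series_geom by (rewrite Rabs_right; nra).
    assert (0 <= m * (m*r)^(S P)) by (apply Rmult_le_pos; [lra| apply pow_le; nra]).
    assert (/ (1 - m * r) <= 2).
    { replace 2 with (/ (/2)) by field. apply Rinv_le_contravar; lra. }
    nra.
Qed.

Lemma ps_deriv_bound (a : nat -> R) (m : R) (Hm : 1 <= m) (Ha : forall n, Rabs (a n) <= m ^ (S n)) p x : Rabs x <= / (4 * m) ->
  Rabs (PSeries (PS_derive_n p a) x) <= 2 * INR (fact p) * 2 ^ p * m ^ (S p).
Proof.
  intros Hx.
  assert (Hm0 : 0 < m) by lra.
  assert (Hq : forall k, Rabs (PS_derive_n p a k * x ^ k) <=
                         INR (fact p) * 2 ^ p * m ^ (S p) * (/2) ^ k).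
  { intros k. unfold PS_derive_n. rewrite !Rabs_mult.
    rewrite (Rabs_right (INR (fact (k + p)) / INR (fact k))).
    2:{ apply Rle_ge, Rmult_le_pos; [apply pos_INR| left; apply Rinv_0_lt_compat, lt_0_INR, lt_O_fact]. }
    pose proof (fact_ratio_bound k p) as F.
    pose proof (Ha (k + p)%nat) as A.
    assert (X : Rabs (x ^ k) <= (/ (4*m)) ^ k).
    { rewrite <- RPow_abs. apply pow_incr. split; [apply Rabs_pos | auto]. }
    assert (0 <= INR (fact (k + p)) / INR (fact k)).
    { apply Rmult_le_pos; [apply pos_INR| left; apply Rinv_0_lt_compat, lt_0_INR, lt_O_fact]. }
    eapply Rle_trans.
    { apply Rmult_le_compat. apply Rmult_le_pos; [auto|apply Rabs_pos]. apply Rabs_pos.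
      apply Rmult_le_compat; [auto|apply Rabs_pos|exact F|exact A]. exact X. }
    rewrite Rinv_mult, Rpow_mult_distr.
    replace (INR (fact p) * 2 ^ (k + p) * m ^ S (k + p) * ((/ 4) ^ k * (/ m) ^ k))
      with (INR (fact p) * 2 ^ p * m ^ (S p) * ((2 * /4) ^ k * (m * /m) ^ k)).
    2:{ rewrite !Rpow_mult_distr. replace (S (k+p)) with (k + S p)%nat by lia. rewrite !pow_add. ring. }
    rewrite Rinv_r by lra. rewrite pow1. replace (2 * / 4) with (/2) by field. lra. }
  assert (Hex : ex_series (fun k => INR (fact p) * 2 ^ p * m ^ (S p) * (/2) ^ k)).
  { apply ex_series_scal_lR, ex_series_geom. rewrite Rabs_right; lra. }
  assert (Hexa : ex_series (fun k => Rabs (PS_derive_n p a k * x ^ k))).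
  { eapply ex_series_le_R; [|exact Hex]. intros k. simpl. rewrite Rabs_Rabsolu. apply Hq. }
  unfold PSeries. eapply Rle_trans. apply Series_Rabs; auto.
  eapply Rle_trans. eapply Series_le; [|exact Hex].
  intros k; split; [apply Rabs_pos| apply Hq].
  rewrite Series_scal_l, Series_geom by (rewrite Rabs_right; lra).
  replace (/ (1 - / 2)) with 2 by field.
  assert (0 <= INR (fact p) * 2 ^ p * m ^ (S p)).
  { repeat apply Rmult_le_pos; try apply pos_INR; try (apply pow_le; lra); lra. }
  lra.
Qed.


Lemma term_le_sum (u : nat -> R) N n : (n <= N)%nat ->
  Rabs (u n) <= sum_f_R0 (fun k => Rabs (u k)) N.
Proof.
  induction N; intros H.
  - assert (n = 0%nat) by lia. subst. simpl. lra.
  - simpl. pose proof (Rabs_pos (u (S N))).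
    assert (0 <= sum_f_R0 (fun k => Rabs (u k)) N) by (apply cond_pos_sum; intros; apply Rabs_pos).
    destruct (Nat.eq_dec n (S N)). subst; lra.
    assert (Rabs (u n) <= sum_f_R0 (fun k => Rabs (u k)) N) by (apply IHN; lia). lra.
Qed.

Lemma conv_bounded (u : nat -> R) : is_lim_seq u 0 -> exists M, 0 <= M /\ forall n, Rabs (u n) <= M.
Proof.
  intros H.
  assert (H1 : exists N, forall n, (N <= n)%nat -> Rabs (u n) < 1).
  { apply is_lim_seq_Reals in H. destruct (H 1 Rlt_0_1) as [N HN].
    exists N. intros n Hn. specialize (HN n Hn). unfold R_dist in HN. rewrite Rminus_0_r in HN. auto. }
  destruct H1 as [N HN].
  exists (1 + sum_f_R0 (fun k => Rabs (u k)) N).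
  assert (Hs : 0 <= sum_f_R0 (fun k => Rabs (u k)) N).
  { apply cond_pos_sum; intros; apply Rabs_pos. }
  split. lra.
  intros n. destruct (Compare_dec.le_lt_dec N n).
  - pose proof (HN n l). lra.
  - pose proof (term_le_sum u N n ltac:(lia)). lra.
Qed.

Fixpoint lamn (k : nat) : nat :=
  match k with O => 16%nat | S k => ((lamn k * (k + 2)) ^ (2 * k + 4))%nat end.
Definition lam (k : nat) : R := INR (lamn k).

Lemma lam_S k : lam (S k) = (lam k * (INR k + 2)) ^ (2 * k + 4).
Proof.
  unfold lam. simpl lamn. rewrite pow_INR, mult_INR, plus_INR. reflexivity.
Qed.

Lemma lam_ge16 k : 16 <= lam k.
Proof.
  induction k. unfold lam; simpl. lra.
  rewrite lam_S. assert (1 <= lam k * (INR k + 2)).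
  { pose proof (pos_INR k). nra. }
  eapply Rle_trans; [exact IHk|].
  eapply Rle_trans with ((lam k * (INR k + 2)) ^ 1). simpl. pose proof (pos_INR k). nra.
  apply Rle_pow; auto; lia.
Qed.

Lemma lam_ge1 k : 1 <= lam k.
Proof. pose proof (lam_ge16 k); lra. Qed.

Lemma lam_S_ge k : lam k ^ (2 * k + 4) <= lam (S k).
Proof.
  rewrite lam_S. apply pow_incr. pose proof (lam_ge16 k). pose proof (pos_INR k). nra.
Qed.

Lemma lam_mono k : lam k <= lam (S k).
Proof.
  eapply Rle_trans; [|apply lam_S_ge].
  pose proof (lam_ge1 k).
  eapply Rle_trans with (lam k ^ 1). simpl; lra. apply Rle_pow; auto; lia.
Qed.

Lemma lam_mono_le i j : (i <= j)%nat -> lam i <= lam j.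
Proof. induction 1. lra. pose proof (lam_mono m). lra. Qed.

Lemma lam_ge_pow2 k : 2 ^ (k + 4) <= lam k.
Proof.
  induction k. unfold lam; simpl; lra.
  eapply Rle_trans; [|apply lam_S_ge].
  pose proof (lam_ge16 k).
  eapply Rle_trans with (lam k ^ 2).
  - replace (S k + 4)%nat with (S (k + 4)) by lia. simpl. simpl in IHk. nra.
  - apply Rle_pow; [lra|lia].
Qed.

Lemma lam_gap k : 8 * 2 ^ (S k) * lam k ^ (k + 2) <= lam (S k).
Proof.
  eapply Rle_trans; [|apply lam_S_ge].
  replace (2 * k + 4)%nat with ((k + 2) + (k + 2))%nat by lia.
  rewrite (pow_add (lam k) (k + 2) (k + 2)).
  assert (H1 : 8 * 2 ^ S k <= lam k ^ (k + 2)).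
  { eapply Rle_trans with (16 ^ (k + 2)).
    - replace (16 ^ (k+2)) with (2 ^ (4 * (k + 2))).
      2:{ rewrite pow_mult. f_equal. lra. }
      replace (8 * 2 ^ S k) with (2 ^ (S k + 3)).
      2:{ rewrite pow_add. simpl. ring. }
      apply Rle_pow; [lra|lia].
    - apply pow_incr. pose proof (lam_ge16 k); lra. }
  assert (0 <= lam k ^ (k + 2)) by (apply pow_le; pose proof (lam_ge16 k); lra).
  apply Rmult_le_compat_r; auto.
Qed.

Lemma lam_growth K : INR (S K) ^ (2 * S K) <= lam K.
Proof.
  destruct K. unfold lam; simpl; lra.
  rewrite lam_S. apply Rle_trans with ((INR K + 2) ^ (2 * K + 4)).
  - replace (2 * S (S K))%nat with (2 * K + 4)%nat by lia.
    right. f_equal. rewrite !S_INR. ring.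
  - apply pow_incr. pose proof (lam_ge16 K). pose proof (pos_INR K). nra.
Qed.

Definition bcoef (p k : nat) : R := lam k ^ p / lam k ^ k.

Lemma bcoef_pos p k : 0 < bcoef p k.
Proof.
  unfold bcoef. pose proof (lam_ge1 k).
  apply Rdiv_lt_0_compat; apply pow_lt; lra.
Qed.

Lemma bcoef_S p k : bcoef (S p) k = bcoef p k * lam k.
Proof. unfold bcoef. simpl. pose proof (lam_ge1 k). field. apply pow_nonzero; lra. Qed.

Lemma bcoef_diag K : bcoef (S K) K = lam K.
Proof. unfold bcoef. simpl. pose proof (lam_ge1 K). field. apply pow_nonzero; lra. Qed.

Lemma bcoef_gt p k : (p < k)%nat -> bcoef p k <= / lam k.
Proof.
  intros Hpk. unfold bcoef. pose proof (lam_ge1 k).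
  assert (E : lam k ^ k = lam k ^ p * lam k ^ S (k - S p)) by (rewrite <- pow_add; f_equal; lia).
  rewrite E.
  assert (0 < lam k ^ p) by (apply pow_lt; lra).
  assert (lam k <= lam k ^ S (k - S p)).
  { eapply Rle_trans with (lam k ^ 1). simpl; lra. apply Rle_pow; [lra|lia]. }
  unfold Rdiv. rewrite Rinv_mult.
  replace (lam k ^ p * (/ lam k ^ p * / lam k ^ S (k - S p))) with (/ lam k ^ S (k - S p)) by (field; split; apply pow_nonzero; lra).
  apply Rinv_le_contravar; lra.
Qed.

Lemma bcoef_le p k : (k <= p)%nat -> bcoef p k <= lam p ^ p.
Proof.
  intros Hkp. unfold bcoef. pose proof (lam_ge1 k).
  assert (1 <= lam k ^ k) by (apply pow_R1_Rle; lra).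
  assert (lam k ^ p / lam k ^ k <= lam k ^ p).
  { unfold Rdiv. assert (0 < lam k ^ p) by (apply pow_lt; lra).
    assert (/ lam k ^ k <= 1). { replace 1 with (/1) by field. apply Rinv_le_contravar; lra. }
    nra. }
  eapply Rle_trans; [exact H1|]. apply pow_incr. split; [lra|]. apply lam_mono_le; auto.
Qed.

Definition bmaj (p : nat) : R := lam p ^ p * 2 ^ p + 1.

Lemma bmaj_pos p : 0 < bmaj p.
Proof. unfold bmaj. pose proof (lam_ge1 p). assert (0 < lam p ^ p * 2 ^ p) by (apply Rmult_lt_0_compat; apply pow_lt; lra). lra. Qed.

Lemma bcoef_maj p k : bcoef p k <= bmaj p * (/ 2) ^ k.
Proof.
  unfold bmaj. destruct (Compare_dec.le_lt_dec k p) as [Hk|Hk].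
  - pose proof (bcoef_le p k Hk).
    assert (1 <= 2 ^ p * (/2) ^ k).
    { replace p with (k + (p - k))%nat by lia. rewrite pow_add.
      replace (2 ^ k * 2 ^ (p - k) * (/ 2) ^ k) with ((2 * /2) ^ k * 2 ^ (p - k)) by (rewrite Rpow_mult_distr; ring).
      replace (2 * / 2) with 1 by field. rewrite pow1, Rmult_1_l. apply pow_R1_Rle; lra. }
    assert (0 <= lam p ^ p) by (apply pow_le; pose proof (lam_ge1 p); lra).
    assert (0 < (/ 2) ^ k) by (apply pow_lt; lra).
    nra.
  - pose proof (bcoef_gt p k Hk). pose proof (lam_ge_pow2 k).
    assert (/ lam k <= (/2) ^ k).
    { rewrite pow_inv. apply Rinv_le_contravar. apply pow_lt; lra.
      eapply Rle_trans; [|exact H0]. apply Rle_pow; [lra|lia]. }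
    assert (0 <= lam p ^ p * 2 ^ p * (/ 2) ^ k).
    { apply Rmult_le_pos; [apply Rmult_le_pos|]; apply pow_le; try lra. pose proof (lam_ge1 p); lra. }
    lra.
Qed.

Lemma geom_ex B : ex_series (fun k => B * (/ 2) ^ k).
Proof. apply ex_series_scal_lR, ex_series_geom. rewrite Rabs_right; lra. Qed.

Lemma geom_series B : Series (fun k => B * (/ 2) ^ k) = 2 * B.
Proof.
  rewrite Series_scal_l, Series_geom by (rewrite Rabs_right; lra). field.
Qed.

Lemma maj_ex (a : nat -> R) B : (forall k, Rabs (a k) <= B * (/2) ^ k) -> ex_series a.
Proof. intros H. apply (ex_series_le_R _ _ H (geom_ex B)). Qed.

Lemma maj_abs_ex (a : nat -> R) B : (forall k, Rabs (a k) <= B * (/2) ^ k) ->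
  ex_series (fun k => Rabs (a k)).
Proof. intros H. apply (ex_series_le_R _ (fun k => B * (/2)^k)); [|apply geom_ex]. intros k; rewrite Rabs_Rabsolu; auto. Qed.

Lemma maj_Series_bound (a : nat -> R) B : (forall k, Rabs (a k) <= B * (/2) ^ k) ->
  Rabs (Series a) <= 2 * B.
Proof.
  intros H. eapply Rle_trans. apply Series_Rabs. eapply maj_abs_ex; eauto.
  rewrite <- geom_series. apply Series_le; [|apply geom_ex]. intros k; split; [apply Rabs_pos|auto].
Qed.

Lemma tail_bound (a : nat -> R) B n : (forall k, Rabs (a k) <= B * (/2) ^ k) ->
  Rabs (Series a - sum_f_R0 a n) <= 2 * B * (/2) ^ (S n).
Proof.
  intros H.
  rewrite (Series_incr_n _ (S n)) by (lia || eapply maj_ex; eauto).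
  simpl (Init.Nat.pred (S n)).
  replace (sum_f_R0 a n + Series (fun k => a (S n + k)%nat) - sum_f_R0 a n)
    with (Series (fun k => a (S n + k)%nat)) by ring.
  replace (2 * B * (/2) ^ (S n)) with (2 * (B * (/2) ^ (S n))) by ring.
  apply maj_Series_bound. intros k. eapply Rle_trans; [apply H|].
  rewrite pow_add. right; ring.
Qed.

Definition Cs (p : nat) (phi t : R) : R :=
  Series (fun k => bcoef p k * cos (lam k * t + phi)).

Definition psum (p : nat) (phi : R) (n : nat) (t : R) : R :=
  sum_f_R0 (fun k => bcoef p k * cos (lam k * t + phi)) n.

Lemma Cs_term_maj p phi t k : Rabs (bcoef p k * cos (lam k * t + phi)) <= bmaj p * (/2) ^ k.
Proof.
  rewrite Rabs_mult. rewrite (Rabs_right (bcoef p k)) by (left; apply bcoef_pos).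
  pose proof (COS_bound (lam k * t + phi)). pose proof (bcoef_pos p k).
  assert (Rabs (cos (lam k * t + phi)) <= 1) by (apply Rabs_le; lra).
  pose proof (bcoef_maj p k). nra.
Qed.

Lemma Cs_bound p phi t : Rabs (Cs p phi t) <= 2 * bmaj p.
Proof. apply maj_Series_bound. intros; apply Cs_term_maj. Qed.

Lemma term_derive p phi k y :
  is_derive (fun t => bcoef p k * cos (lam k * t + phi)) y
            (bcoef (S p) k * cos (lam k * y + (phi + PI / 2))).
Proof.
  auto_derive; auto. rewrite bcoef_S.
  replace (lam k * y + (phi + PI / 2)) with ((lam k * y + phi) + PI/2) by ring.
  rewrite cos_plus, cos_PI2, sin_PI2. ring.
Qed.

Lemma psum_derive p phi n y :
  is_derive (psum p phi n) y (psum (S p) (phi + PI/2) n y).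
Proof.
  induction n.
  - unfold psum; simpl. apply term_derive.
  - unfold psum; simpl.
    apply (is_derive_plus (fun t => sum_f_R0 (fun k => bcoef p k * cos (lam k * t + phi)) n)
             (fun t => bcoef p (S n) * cos (lam (S n) * t + phi))).
    apply IHn. apply term_derive.
Qed.

Lemma psum_cont p phi n y : continuity_pt (psum p phi n) y.
Proof.
  apply derivable_continuous_pt. exists (psum (S p) (phi + PI/2) n y).
  apply is_derive_Reals, psum_derive.
Qed.

Lemma Cs_CVU p phi c r : CVU (psum p phi) (Cs p phi) c r.
Proof.
  intros eps Heps.
  pose proof (bmaj_pos p) as Hb.
  destruct (pow_lt_1_zero (/2) ltac:(rewrite Rabs_right; lra) (eps / (2 * bmaj p)))
    as [N HN].
  { apply Rdiv_lt_0_compat; lra. }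
  exists N. intros n y Hn _.
  unfold Cs, psum. eapply Rle_lt_trans. apply tail_bound. intros; apply Cs_term_maj.
  specialize (HN (S n) ltac:(lia)). rewrite Rabs_right in HN by (left; apply pow_lt; lra).
  apply Rmult_lt_compat_l with (r := 2 * bmaj p) in HN; [|lra].
  replace (2 * bmaj p * (eps / (2 * bmaj p))) with eps in HN by (field; lra). lra.
Qed.

Lemma Cs_cont_pt p phi y : continuity_pt (Cs p phi) y.
Proof.
  apply (CVU_continuity (psum p phi) (Cs p phi) y (mkposreal 1 Rlt_0_1)).
  apply Cs_CVU. intros; apply psum_cont.
  unfold Boule; simpl. rewrite Rminus_diag, Rabs_R0; lra.
Qed.

Lemma Cs_cont p phi : continuity (Cs p phi).
Proof. intros y; apply Cs_cont_pt. Qed.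

Lemma Cs_deriv p phi t : derivable_pt_lim (Cs p phi) t (Cs (S p) (phi + PI/2) t).
Proof.
  apply (derivable_pt_lim_CVU (psum p phi) (psum (S p) (phi + PI/2)) (Cs p phi)
           (Cs (S p) (phi + PI/2)) t t (mkposreal 1 Rlt_0_1)).
  - unfold Boule; simpl. rewrite Rminus_diag, Rabs_R0; lra.
  - intros y n _. apply is_derive_Reals, psum_derive.
  - intros y _. unfold Cs, psum.
    assert (Hex : ex_series (fun k => bcoef p k * cos (lam k * y + phi))).
    { eapply maj_ex. intros; apply Cs_term_maj. }
    apply Series_correct in Hex. apply is_series_Reals in Hex. exact Hex.
  - apply Cs_CVU.
  - intros; apply Cs_cont_pt.
Qed.

Lemma Series_zero : Series (fun _ : nat => 0) = 0.
Proof.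
  rewrite (Series_ext (fun _ : nat => 0) (fun n => 0 * 0)) by (intros; ring).
  rewrite Series_scal_l. ring.
Qed.

Lemma Series_nonneg (a : nat -> R) : (forall n, 0 <= a n) -> ex_series a -> 0 <= Series a.
Proof.
  intros H Hex. rewrite <- Series_zero. apply Series_le; auto. intros; split; [lra|auto].
Qed.

Lemma Series_ge_term (a : nat -> R) K : (forall n, 0 <= a n) -> ex_series a -> a K <= Series a.
Proof.
  intros H Hex.
  rewrite (Series_incr_n _ (S K)) by (lia || auto). simpl (Init.Nat.pred (S K)).
  assert (0 <= Series (fun k => a (S K + k)%nat)).
  { apply Series_nonneg; auto. apply (ex_series_incr_n a (S K)); auto. }
  assert (a K <= sum_f_R0 a K).
  { destruct K. simpl; lra. simpl.
    assert (0 <= sum_f_R0 a K) by (apply cond_pos_sum; auto). lra. }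
  lra.
Qed.

Lemma bcoef_le' p k : bcoef p k <= lam k ^ p.
Proof.
  unfold bcoef. pose proof (lam_ge1 k).
  assert (1 <= lam k ^ k) by (apply pow_R1_Rle; lra).
  assert (0 < lam k ^ p) by (apply pow_lt; lra).
  assert (/ lam k ^ k <= 1). { replace 1 with (/1) by field. apply Rinv_le_contravar; lra. }
  unfold Rdiv. nra.
Qed.

Lemma bcoef_off K k : k <> K -> bcoef (S K) k <= lam K / 8 * (/ 2) ^ k.
Proof.
  intros Hk. destruct (Compare_dec.lt_eq_lt_dec k K) as [[Hlt|Heq]|Hgt].
  - destruct K as [|K']; [lia|].
    pose proof (bcoef_le' (S (S K')) k) as H1.
    assert (H2 : lam k ^ S (S K') <= lam K' ^ (K' + 2)).
    { replace (K' + 2)%nat with (S (S K')) by lia. apply pow_incr.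
      split. pose proof (lam_ge1 k); lra. apply lam_mono_le; lia. }
    pose proof (lam_gap K') as H3.
    assert (H4 : (/2) ^ S K' <= (/2) ^ k).
    { rewrite !pow_inv. apply Rinv_le_contravar. apply pow_lt; lra. apply Rle_pow; [lra|lia]. }
    assert (H5 : 0 < 2 ^ S K') by (apply pow_lt; lra).
    assert (lam K' ^ (K' + 2) <= lam (S K') / 8 * (/2) ^ S K').
    { rewrite pow_inv. apply Rmult_le_reg_r with (8 * 2 ^ S K'). lra.
      replace (lam (S K') / 8 * / 2 ^ S K' * (8 * 2 ^ S K')) with (lam (S K')) by (field; lra).
      lra. }
    assert (0 <= lam (S K') / 8) by (pose proof (lam_ge1 (S K')); lra).
    assert (lam (S K') / 8 * (/2) ^ S K' <= lam (S K') / 8 * (/2) ^ k) by (apply Rmult_le_compat_l; auto).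
    lra.
  - lia.
  - destruct (Nat.eq_dec k (S K)) as [E|E].
    + subst k. unfold bcoef. replace (lam (S K) ^ S K / lam (S K) ^ S K) with 1.
      2:{ field. apply pow_nonzero. pose proof (lam_ge1 (S K)); lra. }
      pose proof (lam_ge_pow2 K).
      rewrite pow_inv. apply Rmult_le_reg_r with (8 * 2 ^ S K). apply Rmult_lt_0_compat; [lra|apply pow_lt; lra].
      replace (lam K / 8 * / 2 ^ S K * (8 * 2 ^ S K)) with (lam K) by (field; apply pow_nonzero; lra).
      replace (8 * 2 ^ S K) with (2 ^ (K + 4)) by (rewrite pow_add; simpl; ring). lra.
    + pose proof (bcoef_gt (S K) k ltac:(lia)).
      pose proof (lam_ge_pow2 k). pose proof (lam_ge16 K).
      assert (/ lam k <= / 2 ^ (k + 4)) by (apply Rinv_le_contravar; [apply pow_lt; lra| auto]).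
      rewrite pow_add in H2. rewrite Rinv_mult in H2.
      rewrite pow_inv.
      assert (0 < / 2 ^ k) by (apply Rinv_0_lt_compat, pow_lt; lra).
      simpl in H2. nra.
Qed.

Lemma Cs_comb p phi alpha t :
  cos alpha * Cs p phi t + sin alpha * Cs p (phi - PI/2) t =
  Series (fun k => bcoef p k * cos (lam k * t + phi - alpha)).
Proof.
  unfold Cs. rewrite <- !Series_scal_l. rewrite <- Series_plus.
  - apply Series_ext. intros k.
    replace (lam k * t + (phi - PI / 2)) with ((lam k * t + phi) - PI/2) by ring.
    rewrite !cos_minus, cos_PI2, sin_PI2. ring.
  - apply ex_series_scal_lR. eapply maj_ex. intros; apply Cs_term_maj.
  - apply ex_series_scal_lR. eapply maj_ex. intros; apply Cs_term_maj.
Qed.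

Lemma Cs_growth K phi t :
  lam K / 2 <= Rabs (Cs (S K) phi t) + Rabs (Cs (S K) (phi - PI/2) t).
Proof.
  set (alpha := lam K * t + phi).
  set (b := bcoef (S K)).
  assert (Hex : ex_series b).
  { eapply maj_ex. intros k. rewrite Rabs_right. apply bcoef_maj. left; apply bcoef_pos. }
  assert (Hex2 : ex_series (fun k => b k * (1 - cos (lam k * t + phi - alpha)))).
  { apply (maj_ex _ (bmaj (S K) * 2)). intros k. unfold b.
    pose proof (bcoef_maj (S K) k). pose proof (bcoef_pos (S K) k).
    pose proof (COS_bound (lam k * t + phi - alpha)).
    rewrite Rabs_right by nra. nra. }
  assert (E : Series (fun k => b k * cos (lam k * t + phi - alpha)) =
              Series b - Series (fun k => b k * (1 - cos (lam k * t + phi - alpha)))).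
  { rewrite <- Series_minus; auto. apply Series_ext; intros; ring. }
  assert (L1 : b K <= Series b) by (apply Series_ge_term; auto; intros; left; apply bcoef_pos).
  assert (L2 : Series (fun k => b k * (1 - cos (lam k * t + phi - alpha))) <= lam K / 2).
  { replace (lam K / 2) with (Series (fun k => lam K / 4 * (/2) ^ k)) by (rewrite geom_series; field).
    apply Series_le; [|apply geom_ex]. intros k. unfold b.
    pose proof (bcoef_pos (S K) k). pose proof (COS_bound (lam k * t + phi - alpha)).
    split. nra.
    destruct (Nat.eq_dec k K) as [->|Hk].
    - unfold alpha. replace (lam K * t + phi - (lam K * t + phi)) with 0 by ring. rewrite cos_0.
      replace (1 - 1) with 0 by ring. rewrite Rmult_0_r.
      apply Rmult_le_pos. pose proof (lam_ge1 K); lra. left; apply pow_lt; lra.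
    - pose proof (bcoef_off K k Hk). nra. }
  assert (Hb : b K = lam K) by apply bcoef_diag.
  unfold b in E. rewrite <- Cs_comb in E. fold b in E.
  pose proof (COS_bound alpha). pose proof (SIN_bound alpha).
  assert (cos alpha * Cs (S K) phi t <= Rabs (Cs (S K) phi t)).
  { eapply Rle_trans. apply Rle_abs. rewrite Rabs_mult.
    pose proof (Rabs_pos (Cs (S K) phi t)).
    assert (Rabs (cos alpha) <= 1) by (apply Rabs_le; lra). nra. }
  assert (sin alpha * Cs (S K) (phi - PI/2) t <= Rabs (Cs (S K) (phi - PI/2) t)).
  { eapply Rle_trans. apply Rle_abs. rewrite Rabs_mult.
    pose proof (Rabs_pos (Cs (S K) (phi - PI/2) t)).
    assert (Rabs (sin alpha) <= 1) by (apply Rabs_le; lra). nra. }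
  lra.
Qed.

Definition Hd (j : nat) (t : R) : Cx :=
  (Cs j (INR j * (PI / 2)) t, Cs j (INR j * (PI / 2) - PI / 2) t).

Lemma Hd_deriv_fst j t : derivable_pt_lim (fun s => fst (Hd j s)) t (fst (Hd (S j) t)).
Proof.
  unfold Hd; cbn [fst].
  replace (INR (S j) * (PI / 2)) with (INR j * (PI / 2) + PI / 2) by (rewrite S_INR; ring).
  apply Cs_deriv.
Qed.

Lemma Hd_deriv_snd j t : derivable_pt_lim (fun s => snd (Hd j s)) t (snd (Hd (S j) t)).
Proof.
  unfold Hd; cbn [snd].
  replace (INR (S j) * (PI / 2) - PI / 2) with (INR j * (PI / 2) - PI / 2 + PI / 2) by (rewrite S_INR; ring).
  apply Cs_deriv.
Qed.

Lemma Hd_cont_fst j : continuity (fun s => fst (Hd j s)).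
Proof. unfold Hd; simpl. apply Cs_cont. Qed.
Lemma Hd_cont_snd j : continuity (fun s => snd (Hd j s)).
Proof. unfold Hd; simpl. apply Cs_cont. Qed.

Lemma Hd_growth K t : lam K / 2 <= Rabs (fst (Hd (S K) t)) + Rabs (snd (Hd (S K) t)).
Proof. unfold Hd; cbn [fst snd]. apply Cs_growth. Qed.

Lemma Hd_bound j t : Rabs (fst (Hd j t)) <= 2 * bmaj j /\ Rabs (snd (Hd j t)) <= 2 * bmaj j.
Proof. unfold Hd; cbn [fst snd]. split; apply Cs_bound. Qed.

Lemma cos_sin_mult s t n : cos s = cos t -> sin s = sin t ->
  cos (INR n * s) = cos (INR n * t) /\ sin (INR n * s) = sin (INR n * t).
Proof.
  intros Hc Hs. induction n.
  - simpl. rewrite !Rmult_0_l. auto.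
  - rewrite S_INR. replace ((INR n + 1) * s) with (INR n * s + s) by ring.
    replace ((INR n + 1) * t) with (INR n * t + t) by ring.
    rewrite cos_plus, sin_plus, cos_plus, sin_plus. destruct IHn as [-> ->]. rewrite Hc, Hs. auto.
Qed.

Lemma Hd_invariant j s t : cos s = cos t -> sin s = sin t -> Hd j s = Hd j t.
Proof.
  intros Hc Hs. unfold Hd, Cs. f_equal; apply Series_ext; intros k; f_equal;
  unfold lam; destruct (cos_sin_mult s t (lamn k) Hc Hs) as [C S'];
  rewrite !cos_plus, C, S'; reflexivity.
Qed.

Lemma nat_above (x : R) : exists n : nat, x < INR n.
Proof.
  destruct (archimed x) as [H1 _].
  destruct (Z_le_gt_dec (up x) 0) as [Hz|Hz].
  - exists 0%nat. simpl. apply IZR_le in Hz. lra.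
  - exists (Z.to_nat (up x)). rewrite INR_IZR_INZ. rewrite Z2Nat.id by lia. lra.
Qed.

Definition PSC (a : nat -> Cx) (t0 t : R) : Cx :=
  (PSeries (fun n => fst (a n)) (t - t0), PSeries (fun n => snd (a n)) (t - t0)).

Definition Good (u : R -> Cx) (m : nat) (t0 : R) (a : nat -> Cx) : Prop :=
  1 <= INR m /\ Rabs t0 <= INR m /\
  (forall n, Rabs (fst (a n)) <= INR m ^ S n /\ Rabs (snd (a n)) <= INR m ^ S n) /\
  (forall t, Rabs (t - t0) < / INR m -> u t = PSC a t0 t).

Lemma Pser_coef_bound (b : nat -> R) (r l : R) : 0 < r -> Pser b r l ->
  exists M, 0 <= M /\ forall n, Rabs (b n) * r ^ n <= M.
Proof.
  intros Hr H. apply is_pseries_Reals in H.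
  assert (Hex : ex_series (fun n => b n * r ^ n)).
  { exists l. unfold is_pseries in H.
    eapply is_series_ext; [|exact H]. intros n. simpl. unfold scal; simpl. unfold mult; simpl.
    rewrite pow_n_pow. ring. }
  apply ex_series_lim_0 in Hex. destruct (conv_bounded _ Hex) as [M [HM HMb]].
  exists M; split; auto. intros n. specialize (HMb n). rewrite Rabs_mult in HMb.
  rewrite (Rabs_right (r ^ n)) in HMb; auto. left; apply pow_lt; lra.
Qed.

Lemma coef_bound_m (b : nat -> R) (r M m : R) : 0 < r -> 0 <= M -> M <= m -> / r <= m ->
  (forall n, Rabs (b n) * r ^ n <= M) -> forall n, Rabs (b n) <= m ^ S n.
Proof.
  intros Hr HM HMm Hrm Hb n.
  assert (Hrn : 0 < r ^ n) by (apply pow_lt; lra).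
  assert (H1 : Rabs (b n) <= M * / r ^ n).
  { apply Rmult_le_reg_r with (r ^ n); auto. rewrite Rmult_assoc, Rinv_l by lra. rewrite Rmult_1_r. auto. }
  assert (H2 : / r ^ n <= m ^ n).
  { rewrite <- pow_inv. apply pow_incr. split; auto. left; apply Rinv_0_lt_compat; lra. }
  simpl. assert (0 <= / r ^ n) by (left; apply Rinv_0_lt_compat; lra).
  assert (0 <= m) by (pose proof (Rinv_0_lt_compat r Hr); lra).
  eapply Rle_trans; [exact H1|]. apply Rmult_le_compat; auto.
Qed.

Lemma analytic_to_good Phi f t0 :
  real_analytic_at Phi f t0 -> exists m a, Good (pullback Phi f) m t0 a.
Proof.
  intros [a [delta [Hd Hser]]].
  set (r := delta / 2).
  assert (Hr : 0 < r) by (unfold r; lra).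
  destruct (Hser (t0 + r) ltac:(unfold r; lra)) as [H1 H2].
  replace (t0 + r - t0) with r in H1, H2 by ring.
  destruct (Pser_coef_bound _ _ _ Hr H1) as [M1 [HM1 HB1]].
  destruct (Pser_coef_bound _ _ _ Hr H2) as [M2 [HM2 HB2]].
  destruct (nat_above (M1 + M2 + / r + 1 + Rabs t0)) as [m Hm].
  pose proof (Rinv_0_lt_compat r Hr). pose proof (Rabs_pos t0).
  exists m, a. split; [lra|]. split; [lra|]. split.
  - intros n. split.
    + apply (coef_bound_m (fun n => fst (a n)) r M1); auto; lra.
    + apply (coef_bound_m (fun n => snd (a n)) r M2); auto; lra.
  - intros t Ht.
    assert (Hm0 : 0 < INR m) by lra.
    assert (/ INR m < r).
    { apply Rmult_lt_reg_r with (INR m * r). nra.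
      replace (/ INR m * (INR m * r)) with r by (field; lra).
      assert (/r * r = 1) by (field; lra). nra. }
    destruct (Hser t) as [P1 P2].
    { apply Rabs_def2 in Ht. unfold r in *. lra. }
    apply is_pseries_Reals, is_pseries_unique in P1.
    apply is_pseries_Reals, is_pseries_unique in P2.
    unfold PSC. rewrite P1, P2. destruct (pullback Phi f t); reflexivity.
Qed.

Lemma bounded_to_analytic Phi f t0 (a : nat -> Cx) (m delta : R) :
  1 <= m -> 0 < delta -> delta <= / (2 * m) ->
  (forall n, Rabs (fst (a n)) <= m ^ S n /\ Rabs (snd (a n)) <= m ^ S n) ->
  (forall t, Rabs (t - t0) < delta -> pullback Phi f t = PSC a t0 t) ->
  real_analytic_at Phi f t0.
Proof.
  intros Hm Hd Hdm Ha Heq.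
  exists a, delta. split; auto. intros t Ht.
  assert (Hx : Rabs (t - t0) < delta) by (apply Rabs_def1; lra).
  rewrite (Heq t Hx). unfold PSC; simpl.
  assert (Hmx : m * Rabs (t - t0) < 1).
  { assert (m * delta <= / 2).
    { apply Rle_trans with (m * / (2 * m)). apply Rmult_le_compat_l; lra. right; field; lra. }
    pose proof (Rabs_pos (t - t0)). nra. }
  split; apply is_pseries_Reals, PSeries_correct, CV_disk_correct.
  - unfold CV_disk. apply (ps_abs_ex (fun n => fst (a n)) m Hm (fun n => proj1 (Ha n))). auto.
  - unfold CV_disk. apply (ps_abs_ex (fun n => snd (a n)) m Hm (fun n => proj2 (Ha n))). auto.
Qed.

Lemma Derive_n_Hd_fst p t : Derive_n (fun s => fst (Hd 0 s)) p t = fst (Hd p t).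
Proof.
  revert t. induction p; intros t; [reflexivity|].
  simpl. rewrite (Derive_ext _ (fun s => fst (Hd p s))) by auto.
  apply is_derive_unique, is_derive_Reals, Hd_deriv_fst.
Qed.

Lemma Derive_n_Hd_snd p t : Derive_n (fun s => snd (Hd 0 s)) p t = snd (Hd p t).
Proof.
  revert t. induction p; intros t; [reflexivity|].
  simpl. rewrite (Derive_ext _ (fun s => snd (Hd p s))) by auto.
  apply is_derive_unique, is_derive_Reals, Hd_deriv_snd.
Qed.

Lemma PSC_exder (b : nat -> R) (m t0 y : R) : 1 <= m -> (forall n, Rabs (b n) <= m ^ S n) ->
  Rabs (y - t0) < / m -> forall k, ex_derive_n (fun s => PSeries b (s - t0)) k y.
Proof.
  intros Hm Hb Hy k. apply (ex_derive_n_comp_trans (PSeries b) k y (- t0)).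
  apply ex_derive_n_PSeries. apply (ps_in_radius b m Hm Hb). exact Hy.
Qed.

Lemma PSC_deriv_bound (b : nat -> R) (m t0 s : R) p : 1 <= m -> (forall n, Rabs (b n) <= m ^ S n) ->
  Rabs (s - t0) <= / (4 * m) ->
  Rabs (Derive_n (fun y => PSeries b (y - t0)) p s) <= 2 * INR (fact p) * 2 ^ p * m ^ (S p).
Proof.
  intros Hm Hb Hs.
  change (fun y => PSeries b (y - t0)) with (fun y => PSeries b (y + - t0)).
  rewrite (Derive_n_comp_trans (PSeries b) p s (- t0)).
  rewrite Derive_n_PSeries.
  - apply ps_deriv_bound; auto.
  - apply (ps_in_radius b m Hm Hb).
    eapply Rle_lt_trans; [exact Hs|]. apply Rinv_lt_contravar; nra.
Qed.

Definition hcomb (c t : R) : Cx := (c * fst (Hd 0 t), c * snd (Hd 0 t)).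

Lemma fact_le_pow q : INR (fact q) <= INR q ^ q.
Proof.
  induction q. simpl; lra.
  change (fact (S q)) with (S q * fact q)%nat. rewrite mult_INR. rewrite <- tech_pow_Rmult.
  apply Rmult_le_compat_l. apply pos_INR.
  eapply Rle_trans; [exact IHq|]. apply pow_incr. split; [apply pos_INR|]. rewrite S_INR; lra.
Qed.

Lemma INR_le_pow2 q : INR q <= 2 ^ q.
Proof. induction q. simpl; lra. rewrite S_INR. simpl. assert (1 <= 2 ^ q) by (apply pow_R1_Rle; lra). lra. Qed.

Lemma growth_contra (M C : R) : 1 <= M -> 0 < C ->
  exists K, C * INR (fact (S K)) * 2 ^ (S K) * M ^ (S (S K)) < lam K / 2.
Proof.
  intros HM HC.
  destruct (nat_above (2 * C * M + 4 * M)) as [K HK].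
  assert (HCM : 0 < 2 * C * M) by (apply Rmult_lt_0_compat; lra).
  exists K. set (q := S K). pose proof (lam_growth K) as HL. fold q in HL.
  assert (Hq : INR K < INR q) by (unfold q; rewrite S_INR; lra).
  assert (Hq0 : 0 < INR q) by (pose proof (pos_INR K); lra).
  pose proof (fact_le_pow q) as Hf.
  assert (H2 : 2 * C * M < 2 ^ q) by (pose proof (INR_le_pow2 q); lra).
  assert (H4 : (4 * M) ^ q <= INR q ^ q) by (apply pow_incr; lra).
  rewrite Rpow_mult_distr in H4.
  replace (4 ^ q) with (2 ^ q * 2 ^ q) in H4 by (rewrite <- Rpow_mult_distr; f_equal; lra).
  assert (Hqq : INR q ^ (2 * q) = INR q ^ q * INR q ^ q) by (rewrite <- pow_add; f_equal; lia).
  rewrite Hqq in HL.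
  assert (P1 : 0 < 2 ^ q) by (apply pow_lt; lra).
  assert (P2 : 0 < M ^ q) by (apply pow_lt; lra).
  assert (P3 : 0 < INR q ^ q) by (apply pow_lt; lra).
  assert (P4 : 0 <= INR (fact q)) by apply pos_INR.
  change (M ^ S q) with (M * M ^ q).
  assert (Q1 : 0 < C * 2 ^ q) by (apply Rmult_lt_0_compat; assumption).
  assert (Q2 : 0 < C * 2 ^ q * M) by (apply Rmult_lt_0_compat; [assumption|lra]).
  assert (Q4 : 0 < C * 2 ^ q * M * M ^ q) by (apply Rmult_lt_0_compat; assumption).
  assert (Q5 : 0 < INR q ^ q * 2 ^ q) by (apply Rmult_lt_0_compat; assumption).
  assert (Q6 : 0 < INR q ^ q * 2 ^ q * M ^ q) by (apply Rmult_lt_0_compat; assumption).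
  (* C * q! * 2^q * (M * M^q) <= C * q^q * 2^q * M * M^q < q^q * q^q / 2 *)
  assert (E1 : C * INR (fact q) * 2 ^ q * (M * M ^ q) <= C * INR q ^ q * 2 ^ q * M * M ^ q).
  { replace (C * INR (fact q) * 2 ^ q * (M * M ^ q)) with (INR (fact q) * (C * 2 ^ q * M * M ^ q)) by ring.
    replace (C * INR q ^ q * 2 ^ q * M * M ^ q) with (INR q ^ q * (C * 2 ^ q * M * M ^ q)) by ring.
    apply Rmult_le_compat_r; [|exact Hf]. left. exact Q4. }
  assert (E2 : C * INR q ^ q * 2 ^ q * M * M ^ q * 2 < INR q ^ q * (2 ^ q * 2 ^ q * M ^ q)).
  { replace (C * INR q ^ q * 2 ^ q * M * M ^ q * 2) with ((2 * C * M) * (INR q ^ q * 2 ^ q * M ^ q)) by ring.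
    replace (INR q ^ q * (2 ^ q * 2 ^ q * M ^ q)) with (2 ^ q * (INR q ^ q * 2 ^ q * M ^ q)) by ring.
    apply Rmult_lt_compat_r; auto. }
  assert (E3 : INR q ^ q * (2 ^ q * 2 ^ q * M ^ q) <= INR q ^ q * INR q ^ q)
    by (apply Rmult_le_compat_l; lra).
  lra.
Qed.

Lemma two_good (F : R -> Cx) (c1 c2 : R) (m : nat) (t1 t2 : R) (a1 a2 : nat -> Cx) :
  c1 <> c2 ->
  Good (fun t => Cadd (F t) (hcomb c1 t)) m t1 a1 ->
  Good (fun t => Cadd (F t) (hcomb c2 t)) m t2 a2 ->
  Rabs (t1 - t2) <= / (4 * INR m) -> False.
Proof.
  intros Hc [Hm1 [_ [Ha1 He1]]] [_ [_ [Ha2 He2]]] Ht.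
  set (M := INR m) in *.
  assert (HM0 : 0 < M) by lra.
  set (d := c1 - c2).
  assert (Hdpos : 0 < Rabs d) by (apply Rabs_pos_lt; unfold d; lra).
  set (e := mkposreal (/ (8 * M)) ltac:(apply Rinv_0_lt_compat; lra)).
  assert (Hnear : forall y, Rabs (y - t1) < / (8 * M) ->
     Rabs (y - t1) < / M /\ Rabs (y - t2) < / M).
  { intros y Hy.
    assert (/ (8 * M) < / M) by (apply Rinv_lt_contravar; nra).
    assert (/ (8 * M) + / (4 * M) < / M).
    { replace (/ (8 * M) + / (4 * M)) with (3 / 8 * / M) by (field; lra).
      pose proof (Rinv_0_lt_compat M HM0). lra. }
    split. lra.
    replace (y - t2) with ((y - t1) + (t1 - t2)) by ring.
    eapply Rle_lt_trans. apply Rabs_triang. lra. }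
  assert (Comp : forall (proj : Cx -> R) (G : nat -> R -> R),
    (forall z w : Cx, proj (Cadd z w) = proj z + proj w) ->
    (forall c t, proj (hcomb c t) = c * G 0%nat t) ->
    (forall p t, Derive_n (G 0%nat) p t = G p t) ->
    (forall n, Rabs (proj (a1 n)) <= M ^ S n) ->
    (forall n, Rabs (proj (a2 n)) <= M ^ S n) ->
    (forall t, proj (PSC a1 t1 t) = PSeries (fun n => proj (a1 n)) (t - t1)) ->
    (forall t, proj (PSC a2 t2 t) = PSeries (fun n => proj (a2 n)) (t - t2)) ->
    forall p, Rabs d * Rabs (G p t1) <= 4 * INR (fact p) * 2 ^ p * M ^ (S p)).
  { intros proj G Hadd Hh HG Hb1 Hb2 Hp1 Hp2 p.
    set (P1 := fun s => PSeries (fun n => proj (a1 n)) (s - t1)).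
    set (P2 := fun s => PSeries (fun n => proj (a2 n)) (s - t2)).
    assert (Hloc : locally t1 (fun s => d * G 0%nat s = P1 s - P2 s)).
    { exists e. intros y Hy. change (Rabs (y - t1) < / (8 * M)) in Hy.
      destruct (Hnear y Hy) as [N1 N2].
      pose proof (f_equal proj (He1 y N1)) as E1. pose proof (f_equal proj (He2 y N2)) as E2.
      rewrite Hadd, Hh, Hp1 in E1. rewrite Hadd, Hh, Hp2 in E2.
      unfold P1, P2, d. lra. }
    assert (Hex : forall (b : nat -> R) tc, (forall n, Rabs (b n) <= M ^ S n) ->
              (forall y, Rabs (y - t1) < / (8 * M) -> Rabs (y - tc) < / M) ->
              locally t1 (fun y => forall k, (k <= p)%nat -> ex_derive_n (fun s => PSeries b (s - tc)) k y)).
    { intros b tc Hb Hy. exists e. intros y Hy'. change (Rabs (y - t1) < / (8 * M)) in Hy'.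
      intros k _. apply (PSC_exder b M tc y); auto. }
    pose proof (Derive_n_ext_loc _ _ p t1 Hloc) as E.
    rewrite Derive_n_scal_l, HG in E.
    rewrite Derive_n_minus in E.
    2:{ apply Hex; auto. intros y Hy; apply (Hnear y Hy). }
    2:{ apply Hex; auto. intros y Hy; apply (Hnear y Hy). }
    assert (B1 : Rabs (Derive_n P1 p t1) <= 2 * INR (fact p) * 2 ^ p * M ^ (S p)).
    { apply PSC_deriv_bound; auto. rewrite Rminus_diag, Rabs_R0.
      left; apply Rinv_0_lt_compat; lra. }
    assert (B2 : Rabs (Derive_n P2 p t1) <= 2 * INR (fact p) * 2 ^ p * M ^ (S p)).
    { apply PSC_deriv_bound; auto. }
    rewrite <- Rabs_mult, E.
    assert (T : forall x y, Rabs (x - y) <= Rabs x + Rabs y).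
    { intros x y. unfold Rminus. rewrite <- (Rabs_Ropp y). apply Rabs_triang. }
    eapply Rle_trans. apply T. lra. }
  assert (CF := Comp fst (fun p t => fst (Hd p t)) (fun z w => eq_refl) (fun c t => eq_refl)
     Derive_n_Hd_fst (fun n => proj1 (Ha1 n)) (fun n => proj1 (Ha2 n)) (fun t => eq_refl) (fun t => eq_refl)).
  assert (CS := Comp snd (fun p t => snd (Hd p t)) (fun z w => eq_refl) (fun c t => eq_refl)
     Derive_n_Hd_snd (fun n => proj2 (Ha1 n)) (fun n => proj2 (Ha2 n)) (fun t => eq_refl) (fun t => eq_refl)).
  destruct (growth_contra M (8 / Rabs d) ltac:(lra) ltac:(apply Rdiv_lt_0_compat; lra)) as [K HK].
  specialize (CF (S K)). specialize (CS (S K)). cbv beta in CF, CS.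
  pose proof (Hd_growth K t1) as HG.
  set (X := INR (fact (S K)) * 2 ^ S K * M ^ S (S K)) in *.
  assert (HX : 8 / Rabs d * INR (fact (S K)) * 2 ^ S K * M ^ S (S K) = 8 * X / Rabs d)
    by (unfold X; field; lra).
  rewrite HX in HK.
  assert (Rabs d * (Rabs (fst (Hd (S K) t1)) + Rabs (snd (Hd (S K) t1))) <= 8 * X).
  { replace (4 * INR (fact (S K)) * 2 ^ S K * M ^ S (S K)) with (4 * X) in CF, CS by (unfold X; ring).
    rewrite Rmult_plus_distr_l. lra. }
  assert (Rabs (fst (Hd (S K) t1)) + Rabs (snd (Hd (S K) t1)) <= 8 * X / Rabs d).
  { apply Rmult_le_reg_l with (Rabs d); auto. replace (Rabs d * (8 * X / Rabs d)) with (8 * X) by (field; lra). lra. }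
  lra.
Qed.

Lemma Good_ext (u v : R -> Cx) m t0 a : (forall t, u t = v t) -> Good u m t0 a -> Good v m t0 a.
Proof.
  intros H [H1 [H2 [H3 H4]]]. repeat split; auto; try apply H3.
  intros t Ht. rewrite <- H. auto.
Qed.

Lemma Cnorm_Cexpi t : Cnorm (Cexpi t) = 1.
Proof.
  unfold Cnorm, Cexpi; simpl. rewrite <- sqrt_1. f_equal.
  pose proof (sin2_cos2 t). unfold Rsqr in H. lra.
Qed.

Lemma gamma_inj Phi rho Rr : rho < 1 -> 1 < Rr -> injective_on_annulus Phi rho Rr ->
  forall s t, gamma Phi s = gamma Phi t -> cos s = cos t /\ sin s = sin t.
Proof.
  intros H1 H2 Hinj s t E.
  assert (A : forall u, in_annulus rho Rr (Cexpi u)).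
  { intros u. unfold in_annulus. rewrite Cnorm_Cexpi. lra. }
  pose proof (Hinj _ _ (A s) (A t) E) as E2. unfold Cexpi in E2.
  inversion E2. auto.
Qed.

Definition tau (Phi : Cx -> Cx) (z : curve Phi) : R :=
  proj1_sig (constructive_indefinite_description _ (proj2_sig z)).

Lemma tau_spec Phi z : proj1_sig z = gamma Phi (tau Phi z).
Proof. unfold tau. destruct (constructive_indefinite_description _ _); simpl; auto. Qed.

Definition gfun (Phi : Cx -> Cx) (f : curve Phi -> Cx) (c : R) : curve Phi -> Cx :=
  fun z => Cadd (f z) (hcomb c (tau Phi z)).

Lemma hcomb_inv c s t : cos s = cos t -> sin s = sin t -> hcomb c s = hcomb c t.
Proof. intros H1 H2. unfold hcomb. rewrite (Hd_invariant 0 s t H1 H2). auto. Qed.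

Lemma pullback_g Phi rho Rr f c : rho < 1 -> 1 < Rr -> injective_on_annulus Phi rho Rr ->
  forall t, pullback Phi (gfun Phi f c) t = Cadd (pullback Phi f t) (hcomb c t).
Proof.
  intros H1 H2 Hinj t. unfold pullback, gfun. f_equal.
  pose proof (tau_spec Phi (curve_pt Phi t)) as E. simpl in E.
  destruct (gamma_inj Phi rho Rr H1 H2 Hinj _ _ (eq_sym E)) as [C S'].
  apply hcomb_inv; auto.
Qed.

Definition hD (c : R) (j : nat) (t : R) : Cx := (c * fst (Hd j t), c * snd (Hd j t)).

Lemma derivs_g k (u : R -> Cx) (D : nat -> R -> Cx) c :
  derivs_upto k u D ->
  derivs_upto k (fun t => Cadd (u t) (hcomb c t)) (fun j t => Cadd (D j t) (hD c j t)).
Proof.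
  intros [H0 [H1 H2]]. split; [|split].
  - intros t. rewrite H0. reflexivity.
  - intros j Hj. destruct (H1 j Hj) as [C1 C2]. split.
    + apply (continuity_plus (fun t => fst (D j t)) (fun t => c * fst (Hd j t))); auto.
      apply (continuity_scal (fun t => fst (Hd j t))). apply Hd_cont_fst.
    + apply (continuity_plus (fun t => snd (D j t)) (fun t => c * snd (Hd j t))); auto.
      apply (continuity_scal (fun t => snd (Hd j t))). apply Hd_cont_snd.
  - intros j Hj t. destruct (H2 j Hj t) as [D1 D2]. split.
    + apply (derivable_pt_lim_plus (fun t => fst (D j t)) (fun t => c * fst (Hd j t))); auto.
      apply (derivable_pt_lim_scal (fun t => fst (Hd j t))). apply Hd_deriv_fst.
    + apply (derivable_pt_lim_plus (fun t => snd (D j t)) (fun t => c * snd (Hd j t))); auto.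
      apply (derivable_pt_lim_scal (fun t => snd (Hd j t))). apply Hd_deriv_snd.
Qed.

Lemma derivs_ext k (u v : R -> Cx) D : (forall t, u t = v t) -> derivs_upto k u D -> derivs_upto k v D.
Proof. intros H [H0 H1]. split; auto. intros t; rewrite <- H; auto. Qed.

Lemma bin_close (y1 y2 : R) : 0 <= y1 -> 0 <= y2 ->
  Z.to_nat (up y1) = Z.to_nat (up y2) -> Rabs (y1 - y2) < 1.
Proof.
  intros H1 H2 E.
  destruct (archimed y1) as [A1 B1]. destruct (archimed y2) as [A2 B2].
  assert (P1 : (0 < up y1)%Z) by (apply lt_IZR; lra).
  assert (P2 : (0 < up y2)%Z) by (apply lt_IZR; lra).
  assert (E2 : up y1 = up y2).
  { rewrite <- (Z2Nat.id (up y1)) by lia. rewrite <- (Z2Nat.id (up y2)) by lia. rewrite E. auto. }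
  rewrite E2 in A1, B1. apply Rabs_def1; lra.
Qed.

Definition bin (m : nat) (t0 : R) : nat := Z.to_nat (up ((t0 + INR m) * (4 * INR m))).

Lemma bin_close_t m t1 t2 : 1 <= INR m -> Rabs t1 <= INR m -> Rabs t2 <= INR m ->
  bin m t1 = bin m t2 -> Rabs (t1 - t2) <= / (4 * INR m).
Proof.
  intros Hm H1 H2 E. unfold bin in E.
  apply Rabs_le_between in H1. apply Rabs_le_between in H2.
  apply bin_close in E; try (apply Rmult_le_pos; lra).
  replace ((t1 + INR m) * (4 * INR m) - (t2 + INR m) * (4 * INR m)) with ((t1 - t2) * (4 * INR m)) in E by ring.
  rewrite Rabs_mult, (Rabs_right (4 * INR m)) in E by lra.
  left. apply Rmult_lt_reg_r with (4 * INR m); [lra|].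
  rewrite Rinv_l by lra. lra.
Qed.


Lemma exists_good_c (Phi : Cx -> Cx) (rho Rr : R) (Hrho1 : rho < 1) (HR : 1 < Rr) (Hinj : injective_on_annulus Phi rho Rr) (f : curve Phi -> Cx) (a b : R) : a < b ->
  exists c, a <= c <= b /\ nowhere_real_analytic Phi (gfun Phi f c).
Proof.
  intros Hab.
  set (U := fun c t => Cadd (pullback Phi f t) (hcomb c t)).
  set (Bad' := fun c m bb => exists t0 a0, Good (U c) m t0 a0 /\ bin m t0 = bb).
  set (u := fun n => let p := Cantor.of_nat n in
             epsilon (inhabits 0) (fun c => Bad' c (fst p) (snd p))).
  destruct (avoid_seq u a b Hab) as [x [Hx Hxu]].
  exists x. split; auto. intros t0 Han.
  destruct (analytic_to_good Phi _ t0 Han) as [m [a0 HG]].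
  apply (Good_ext _ (U x)) in HG.
  2:{ intros t. unfold U. apply (pullback_g Phi rho Rr); auto. }
  set (n := Cantor.to_nat (m, bin m t0)).
  assert (HB : Bad' (u n) m (bin m t0)).
  { unfold u. unfold n. rewrite Cantor.cancel_of_to. simpl.
    apply (epsilon_spec (inhabits 0) (fun c => Bad' c m (bin m t0))).
    exists x, t0, a0. split; auto. }
  destruct HB as [t1 [a1 [HG1 Hb1]]].
  apply (Hxu n).
  destruct (Req_dec x (u n)) as [E|E]; auto. exfalso.
  apply (two_good (pullback Phi f) x (u n) m t0 t1 a0 a1 E HG HG1).
  destruct HG as [Hm [Ht0 _]]. destruct HG1 as [_ [Ht1 _]].
  apply bin_close_t; auto.
Qed.

Lemma density (Phi : Cx -> Cx) (rho Rr : R) (Hrho1 : rho < 1) (HR : 1 < Rr) (Hinj : injective_on_annulus Phi rho Rr) k : Ck_dense Phi k (fun f => in_Ck Phi k f /\ nowhere_real_analytic Phi f).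
Proof.
  intros f [Df HDf] N eps Heps.
  set (Bs := sum_f_R0 bmaj N).
  assert (HBs : forall j, (j <= N)%nat -> bmaj j <= Bs).
  { intros j Hj. pose proof (term_le_sum bmaj N j Hj).
    rewrite (sum_eq _ bmaj) in H by (intros; apply Rabs_right; left; apply bmaj_pos).
    rewrite Rabs_right in H; auto. left; apply bmaj_pos. }
  assert (HBs0 : 0 < Bs) by (pose proof (HBs 0%nat ltac:(lia)); pose proof (bmaj_pos 0); lra).
  set (c0 := eps / (4 * Bs)).
  assert (Hc0 : 0 < c0) by (unfold c0; apply Rdiv_lt_0_compat; lra).
  destruct (exists_good_c Phi rho Rr Hrho1 HR Hinj f (c0 / 3) (2 * c0 / 3) ltac:(lra)) as [c [Hc Hna]].
  set (g := gfun Phi f c).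
  set (Dg := fun j t => Cadd (Df j t) (hD c j t)).
  assert (HDg : derivs_upto k (pullback Phi g) Dg).
  { apply (derivs_ext k (fun t => Cadd (pullback Phi f t) (hcomb c t))).
    - intros t. unfold g. symmetry. apply (pullback_g Phi rho Rr); auto.
    - apply derivs_g; auto. }
  exists g. split; [split; [exists Dg; auto| auto]|]. split; [exists Dg; auto|].
  exists Df, Dg. split; auto. split; auto.
  intros j Hj _ t. unfold Dg, hD.
  destruct (Df j t) as [x y]. unfold Csub, Cadd; cbn [fst snd].
  replace (x + c * fst (Hd j t) - x) with (c * fst (Hd j t)) by ring.
  replace (y + c * snd (Hd j t) - y) with (c * snd (Hd j t)) by ring.
  eapply Rle_trans. apply Cnorm_le_sum. cbn [fst snd].
  rewrite !Rabs_mult. destruct (Hd_bound j t) as [B1 B2].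
  pose proof (HBs j Hj).
  rewrite Rabs_right by lra.
  assert (c * Rabs (fst (Hd j t)) <= c * (2 * Bs)) by (apply Rmult_le_compat_l; lra).
  assert (c * Rabs (snd (Hd j t)) <= c * (2 * Bs)) by (apply Rmult_le_compat_l; lra).
  assert (c * (2 * Bs) <= eps / 2).
  { apply Rle_trans with (c0 * (2 * Bs)). apply Rmult_le_compat_r; lra.
    unfold c0. right. field. lra. }
  lra.
Qed.


Lemma pow_le_one (x : R) n : 0 <= x -> x <= 1 -> x ^ n <= 1.
Proof. intros H1 H2. induction n; simpl. lra. assert (0 <= x ^ n) by (apply pow_le; lra). nra. Qed.

Lemma pow_diff_le (x y : R) n : Rabs x <= 1 -> Rabs y <= 1 ->
  Rabs (y ^ n - x ^ n) <= INR n * Rabs (y - x).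
Proof.
  intros Hx Hy. induction n.
  - simpl. rewrite Rminus_diag, Rabs_R0. lra.
  - replace (y ^ S n - x ^ S n) with (y * (y ^ n - x ^ n) + x ^ n * (y - x)) by (simpl; ring).
    eapply Rle_trans. apply Rabs_triang. rewrite !Rabs_mult.
    assert (Rabs (x ^ n) <= 1) by (rewrite <- RPow_abs; apply pow_le_one; auto; apply Rabs_pos).
    pose proof (Rabs_pos (y ^ n - x ^ n)). pose proof (Rabs_pos (y - x)).
    rewrite S_INR.
    assert (Rabs y * Rabs (y ^ n - x ^ n) <= Rabs (y ^ n - x ^ n)) by (pose proof (Rabs_pos y); nra).
    assert (Rabs (x ^ n) * Rabs (y - x) <= Rabs (y - x)) by (pose proof (Rabs_pos (x ^ n)); nra).
    lra.
Qed.

Lemma finite_sum_diff (b c : nat -> R) (y x eta Bd : R) P :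
  Rabs x <= 1 -> Rabs y <= 1 -> Rabs (y - x) <= eta -> 0 <= Bd ->
  (forall n, (n <= P)%nat -> Rabs (b n - c n) <= eta) ->
  (forall n, (n <= P)%nat -> Rabs (c n) <= Bd) ->
  Rabs (sum_f_R0 (fun n => b n * y ^ n) P - sum_f_R0 (fun n => c n * x ^ n) P)
    <= INR (S P) * (eta + Bd * INR P * eta).
Proof.
  intros Hx Hy Hyx HBd Hb Hc. induction P.
  - simpl. replace (b 0%nat * 1 - c 0%nat * 1) with (b 0%nat - c 0%nat) by ring.
    specialize (Hb 0%nat ltac:(lia)). assert (0 <= eta) by (pose proof (Rabs_pos (y - x)); lra).
    replace (1 * (eta + Bd * 0 * eta)) with eta by ring. auto.
  - rewrite !tech5.
    replace (sum_f_R0 (fun n => b n * y ^ n) P + b (S P) * y ^ S P -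
       (sum_f_R0 (fun n => c n * x ^ n) P + c (S P) * x ^ S P))
      with ((sum_f_R0 (fun n => b n * y ^ n) P - sum_f_R0 (fun n => c n * x ^ n) P) +
            ((b (S P) - c (S P)) * y ^ S P + c (S P) * (y ^ S P - x ^ S P))) by ring.
    eapply Rle_trans. apply Rabs_triang.
    assert (IH : Rabs (sum_f_R0 (fun n => b n * y ^ n) P - sum_f_R0 (fun n => c n * x ^ n) P)
                 <= INR (S P) * (eta + Bd * INR P * eta)).
    { apply IHP; intros; [apply Hb|apply Hc]; lia. }
    assert (Heta : 0 <= eta) by (pose proof (Rabs_pos (y - x)); lra).
    assert (T : Rabs ((b (S P) - c (S P)) * y ^ S P + c (S P) * (y ^ S P - x ^ S P))
                <= eta + Bd * INR (S P) * eta).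
    { eapply Rle_trans. apply Rabs_triang. rewrite !Rabs_mult.
      assert (Rabs (y ^ S P) <= 1) by (rewrite <- RPow_abs; apply pow_le_one; auto; apply Rabs_pos).
      pose proof (Hb (S P) ltac:(lia)). pose proof (Hc (S P) ltac:(lia)).
      pose proof (pow_diff_le x y (S P) Hx Hy).
      pose proof (Rabs_pos (b (S P) - c (S P))). pose proof (Rabs_pos (c (S P))).
      pose proof (Rabs_pos (y ^ S P - x ^ S P)). pose proof (Rabs_pos (y ^ S P)).
      pose proof (pos_INR (S P)).
      assert (Rabs (b (S P) - c (S P)) * Rabs (y ^ S P) <= eta) by nra.
      assert (Rabs (y ^ S P - x ^ S P) <= INR (S P) * eta) by nra.
      assert (Rabs (c (S P)) * Rabs (y ^ S P - x ^ S P) <= Bd * (INR (S P) * eta)) by nra.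
      lra. }
    assert (Mono : INR (S P) * (eta + Bd * INR P * eta) <= INR (S P) * (eta + Bd * INR (S P) * eta)).
    { apply Rmult_le_compat_l. apply pos_INR. rewrite S_INR.
      assert (0 <= Bd * eta) by nra. nra. }
    replace (INR (S (S P)) * (eta + Bd * INR (S P) * eta)) with
      (INR (S P) * (eta + Bd * INR (S P) * eta) + (eta + Bd * INR (S P) * eta))
      by (rewrite (S_INR (S P)); ring).
    lra.
Qed.

Lemma eq_of_close (A B : R) : (forall e, 0 < e -> Rabs (A - B) <= e) -> A = B.
Proof.
  intros H. destruct (Req_dec A B); auto. exfalso.
  assert (0 < Rabs (A - B)) by (apply Rabs_pos_lt; lra).
  specialize (H (Rabs (A - B) / 2) ltac:(lra)). lra.
Qed.

Lemma approx_core (M t Ft ts : R) (bj : nat -> nat -> R) (tj : nat -> R) (bs : nat -> R) (Gj : nat -> R) :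
  1 <= M ->
  (forall j n, Rabs (bj j n) <= M ^ S n) ->
  (forall n, Rabs (bs n) <= M ^ S n) ->
  (forall j, Rabs (Gj j - Ft) <= / INR (S j)) ->
  (forall j, Rabs (t - tj j) <= / (2 * M) -> Gj j = PSeries (bj j) (t - tj j)) ->
  Rabs (t - ts) < / (4 * M) ->
  (forall P eta, 0 < eta -> forall J, exists j, (J <= j)%nat /\ Rabs (tj j - ts) < eta /\
       forall n, (n <= P)%nat -> Rabs (bj j n - bs n) < eta) ->
  Ft = PSeries bs (t - ts).
Proof.
  intros HM Hbj Hbs HG HGe Ht Hcl.
  assert (HM0 : 0 < M) by lra.
  set (r := / (2 * M)).
  assert (Hr0 : 0 < r) by (unfold r; apply Rinv_0_lt_compat; lra).
  assert (HMr : M * r = / 2) by (unfold r; field; lra).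
  assert (Hr1 : r <= 1).
  { unfold r. replace 1 with (/ 1) by field. apply Rinv_le_contravar; lra. }
  assert (Hq : / (4 * M) = r / 2) by (unfold r; field; lra).
  apply eq_of_close. intros e He.
  destruct (pow_lt_1_zero (/2) ltac:(rewrite Rabs_right; lra) (e / (8 * M))) as [P HP].
  { apply Rdiv_lt_0_compat; lra. }
  specialize (HP (S P) ltac:(lia)). rewrite Rabs_right in HP by (left; apply pow_lt; lra).
  assert (Tail : 2 * M * (M * r) ^ S P <= e / 4).
  { rewrite HMr. apply Rmult_lt_compat_l with (r := 2 * M) in HP; [|lra].
    replace (2 * M * (e / (8 * M))) with (e / 4) in HP by (field; lra). lra. }
  set (Bd := M ^ S P).
  assert (HBd : 0 <= Bd) by (apply pow_le; lra).
  set (K := INR (S P) * (1 + Bd * INR P)).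
  assert (HK : 0 <= K) by (unfold K; apply Rmult_le_pos; [apply pos_INR|]; pose proof (pos_INR P); nra).
  set (eta := Rmin (r / 2) (e / 4 / (K + 1))).
  assert (Heta : 0 < eta).
  { unfold eta. apply Rmin_pos; [lra|]. apply Rdiv_lt_0_compat; lra. }
  destruct (nat_above (4 / e)) as [J HJ].
  destruct (Hcl P eta Heta J) as [j [Hj [Htj Hbjs]]].
  set (y := t - tj j). set (x := t - ts).
  assert (Hx : Rabs x <= r / 2) by (unfold x; lra).
  assert (Hyx : Rabs (y - x) <= eta).
  { unfold y, x. replace (t - tj j - (t - ts)) with (- (tj j - ts)) by ring. rewrite Rabs_Ropp. lra. }
  assert (Hy : Rabs y <= r).
  { replace y with (x + (y - x)) by ring. eapply Rle_trans. apply Rabs_triang.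
    assert (eta <= r / 2) by apply Rmin_l. lra. }
  assert (E1 : Rabs (Gj j - Ft) <= e / 4).
  { eapply Rle_trans. apply HG. rewrite S_INR.
    assert (0 < INR j + 1) by (pose proof (pos_INR j); lra).
    assert (INR J <= INR j) by (apply le_INR; auto).
    replace (e / 4) with (/ (4 / e)) by (field; lra).
    apply Rinv_le_contravar. apply Rdiv_lt_0_compat; lra. lra. }
  rewrite (HGe j Hy) in E1. fold y in E1.
  assert (E2 : Rabs (PSeries (bj j) y - sum_f_R0 (fun n => bj j n * y ^ n) P) <= e / 4).
  { eapply Rle_trans. apply (ps_tail (bj j) M HM (Hbj j) y r P); lra. lra. }
  assert (E3 : Rabs (PSeries bs x - sum_f_R0 (fun n => bs n * x ^ n) P) <= e / 4).
  { eapply Rle_trans. apply (ps_tail bs M HM Hbs x r P); lra. lra. }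
  assert (E4 : Rabs (sum_f_R0 (fun n => bj j n * y ^ n) P - sum_f_R0 (fun n => bs n * x ^ n) P) <= e / 4).
  { eapply Rle_trans. apply (finite_sum_diff (bj j) bs y x eta Bd P); try lra.
    - intros n Hn. left. apply Hbjs; auto.
    - intros n Hn. eapply Rle_trans. apply Hbs. unfold Bd. apply Rle_pow; [lra|lia].
    - replace (INR (S P) * (eta + Bd * INR P * eta)) with (K * eta) by (unfold K; ring).
      assert (eta <= e / 4 / (K + 1)) by apply Rmin_r.
      assert (K * eta <= (K + 1) * eta) by nra.
      assert ((K + 1) * eta <= (K + 1) * (e / 4 / (K + 1))) by (apply Rmult_le_compat_l; lra).
      replace ((K + 1) * (e / 4 / (K + 1))) with (e / 4) in H1 by (field; lra). lra. }
  fold x.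
  replace (Ft - PSeries bs x) with
    (- (PSeries (bj j) y - Ft) + (PSeries (bj j) y - sum_f_R0 (fun n => bj j n * y ^ n) P)
     + (sum_f_R0 (fun n => bj j n * y ^ n) P - sum_f_R0 (fun n => bs n * x ^ n) P)
     - (PSeries bs x - sum_f_R0 (fun n => bs n * x ^ n) P)) by ring.
  assert (T4 : forall a b c d, Rabs (- a + b + c - d) <= Rabs a + Rabs b + Rabs c + Rabs d).
  { intros a b c d. unfold Rminus. eapply Rle_trans. apply Rabs_triang.
    rewrite Rabs_Ropp. eapply Rle_trans. apply Rplus_le_compat_r. eapply Rle_trans. apply Rabs_triang.
    apply Rplus_le_compat_r. apply Rabs_triang. rewrite Rabs_Ropp. lra. }
  eapply Rle_trans. apply T4. lra.
Qed.

Lemma Rabs_sub_le a b : Rabs (a - b) <= Rabs a + Rabs b.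
Proof. unfold Rminus. rewrite <- (Rabs_Ropp b). apply Rabs_triang. Qed.

Lemma le_of_close (p Bd : R) : (forall e, 0 < e -> p <= Bd + e) -> p <= Bd.
Proof.
  intros H. destruct (Rle_dec p Bd); auto. exfalso.
  specialize (H ((p - Bd) / 2) ltac:(lra)). lra.
Qed.

Definition xc (tj : nat -> R) (aj : nat -> nat -> Cx) (j i : nat) : R :=
  match i with
  | O => tj j
  | S i' => if Nat.odd i then fst (aj j (Nat.div2 i)) else snd (aj j (Nat.div2 i'))
  end.

Lemma xc_fst tj aj j n : xc tj aj j (S (2 * n)) = fst (aj j n).
Proof.
  unfold xc. replace (Nat.odd (S (2 * n))) with true.
  rewrite Nat.div2_succ_double; auto.
  replace (S (2 * n)) with (2 * n + 1)%nat by lia. rewrite Nat.odd_odd; auto.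
Qed.

Lemma xc_snd tj aj j n : xc tj aj j (S (S (2 * n))) = snd (aj j n).
Proof.
  unfold xc. replace (Nat.odd (S (S (2 * n)))) with false.
  rewrite Nat.div2_succ_double; auto.
  rewrite Nat.odd_succ_succ, Nat.odd_even; auto.
Qed.

Lemma closure_analytic Phi (f : curve Phi -> Cx) (m : nat) (tj : nat -> R)
  (aj : nat -> nat -> Cx) (Gj : nat -> R -> Cx) :
  (forall j, Good (Gj j) m (tj j) (aj j)) ->
  (forall j t, Rabs (fst (Gj j t) - fst (pullback Phi f t)) <= / INR (S j) /\
               Rabs (snd (Gj j t) - snd (pullback Phi f t)) <= / INR (S j)) ->
  exists t0, real_analytic_at Phi f t0.
Proof.
  intros HG HC.
  set (M := INR m).
  assert (HM : 1 <= M) by (destruct (HG 0%nat) as [H _]; exact H).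
  assert (HM0 : 0 < M) by lra.
  set (x := xc tj aj).
  assert (Hb : forall j i, Rabs (x j i) <= M ^ S i).
  { intros j i. destruct (HG j) as [_ [Ht [Ha _]]].
    destruct i as [|i'].
    - simpl. fold M in Ht. lra.
    - unfold x, xc. destruct (Nat.odd (S i')).
      + eapply Rle_trans. apply (Ha (Nat.div2 (S i'))). apply Rle_pow; auto.
        pose proof (Nat.le_div2_diag_l (S i')). lia.
      + eapply Rle_trans. apply (Ha (Nat.div2 i')). apply Rle_pow; auto.
        pose proof (Nat.le_div2_diag_l i'). lia. }
  destruct (cluster_seq x (fun i => M ^ S i) Hb) as [p Hp].
  set (ts := p 0%nat).
  set (as_ := fun n => (p (S (2 * n)), p (S (S (2 * n))))).
  assert (Hbnd : forall i, Rabs (p i) <= M ^ S i).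
  { intros i. apply le_of_close. intros e He.
    destruct (Hp i e He 0%nat) as [j [_ Hj]]. specialize (Hj i (Nat.le_refl _)).
    pose proof (Hb j i). 
    replace (p i) with (x j i - (x j i - p i)) by ring.
    eapply Rle_trans. apply Rabs_sub_le. lra. }
  assert (Has : forall n, Rabs (fst (as_ n)) <= M ^ S n /\ Rabs (snd (as_ n)) <= M ^ S n).
  { intros n. unfold as_; cbn [fst snd]. split; apply le_of_close; intros e He.
    - destruct (Hp (S (2 * n)) e He 0%nat) as [j [_ Hj]]. specialize (Hj _ (Nat.le_refl _)).
      unfold x in Hj. rewrite xc_fst in Hj.
      destruct (HG j) as [_ [_ [Ha _]]]. destruct (Ha n) as [A1 _].
      replace (p (S (2 * n))) with (fst (aj j n) - (fst (aj j n) - p (S (2 * n)))) by ring.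
      eapply Rle_trans. apply Rabs_sub_le. fold M in A1. lra.
    - destruct (Hp (S (S (2 * n))) e He 0%nat) as [j [_ Hj]]. specialize (Hj _ (Nat.le_refl _)).
      unfold x in Hj. rewrite xc_snd in Hj.
      destruct (HG j) as [_ [_ [Ha _]]]. destruct (Ha n) as [_ A2].
      replace (p (S (S (2 * n)))) with (snd (aj j n) - (snd (aj j n) - p (S (S (2 * n))))) by ring.
      eapply Rle_trans. apply Rabs_sub_le. fold M in A2. lra. }
  exists ts.
  apply (bounded_to_analytic Phi f ts as_ M (/ (4 * M))); auto.
  { apply Rinv_0_lt_compat; lra. }
  { apply Rinv_le_contravar; lra. }
  intros t Ht.
  assert (Hsmall : / (2 * M) < / M) by (apply Rinv_lt_contravar; nra).
  assert (Comp : forall (proj : Cx -> R) (idx : nat -> nat),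
     (forall j n, x j (idx n) = proj (aj j n)) ->
     (forall j n, Rabs (proj (aj j n)) <= M ^ S n) ->
     (forall n, Rabs (p (idx n)) <= M ^ S n) ->
     (forall n, (idx n <= S (S (2 * n)))%nat) ->
     (forall j, Rabs (proj (Gj j t) - proj (pullback Phi f t)) <= / INR (S j)) ->
     (forall a0 t0 t, proj (PSC a0 t0 t) = PSeries (fun n => proj (a0 n)) (t - t0)) ->
     proj (pullback Phi f t) = PSeries (fun n => p (idx n)) (t - ts)).
  { intros proj idx Hidx Hbj Hbs Hidxle HCp HPSC.
    apply (approx_core M t (proj (pullback Phi f t)) ts (fun j n => proj (aj j n)) tj
             (fun n => p (idx n)) (fun j => proj (Gj j t))); auto.
    - intros j Hj. destruct (HG j) as [_ [_ [_ He]]]. rewrite He by (fold M; lra). apply HPSC.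
    - intros P eta Heta J. destruct (Hp (S (S (2 * P))) eta Heta J) as [j [Hj Hj2]].
      exists j. split; auto. split.
      + specialize (Hj2 0%nat ltac:(lia)). exact Hj2.
      + intros n Hn. rewrite <- Hidx. apply Hj2. pose proof (Hidxle n). lia. }
  rewrite (surjective_pairing (pullback Phi f t)). unfold PSC. f_equal.
  - apply (Comp fst (fun n => S (2 * n))).
    + intros j n. apply xc_fst.
    + intros j n. destruct (HG j) as [_ [_ [Ha _]]]. apply (Ha n).
    + intros n. apply (Has n).
    + intros n. lia.
    + intros j. apply (HC j t).
    + intros; reflexivity.
  - apply (Comp snd (fun n => S (S (2 * n)))).
    + intros j n. apply xc_snd.
    + intros j n. destruct (HG j) as [_ [_ [Ha _]]]. apply (Ha n).
    + intros n. apply (Has n).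
    + intros n. lia.
    + intros j. apply (HC j t).
    + intros; reflexivity.
Qed.

Lemma le_order_S j k : le_order (S j) k -> le_order j k.
Proof. destruct k; simpl; auto; lia. Qed.

Lemma le_order_0 k : le_order 0 k.
Proof. destruct k; simpl; auto; lia. Qed.

Lemma derivs_unique k u D1 D2 : derivs_upto k u D1 -> derivs_upto k u D2 ->
  forall j, le_order j k -> forall t, D1 j t = D2 j t.
Proof.
  intros [A0 [_ A2]] [B0 [_ B2]] j. induction j; intros Hj t.
  - rewrite A0, B0; auto.
  - assert (E : forall s, D1 j s = D2 j s) by (apply IHj, le_order_S; auto).
    destruct (A2 j Hj t) as [F1 S1]. destruct (B2 j Hj t) as [F2 S2].
    assert (Ef : (fun s => fst (D1 j s)) = (fun s => fst (D2 j s)))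
      by (apply functional_extensionality; intros s; rewrite E; auto).
    assert (Es : (fun s => snd (D1 j s)) = (fun s => snd (D2 j s)))
      by (apply functional_extensionality; intros s; rewrite E; auto).
    rewrite Ef in F1. rewrite Es in S1.
    rewrite (surjective_pairing (D1 (S j) t)), (surjective_pairing (D2 (S j) t)).
    f_equal; eapply uniqueness_limite; eauto.
Qed.

Lemma close_trans Phi k N e1 e2 f g h :
  Ck_close Phi k N e1 f g -> Ck_close Phi k N e2 g h -> Ck_close Phi k N (e1 + e2) f h.
Proof.
  intros [Df [Dg [HDf [HDg B1]]]] [Dg' [Dh [HDg' [HDh B2]]]].
  exists Df, Dh. split; auto. split; auto. intros j Hj Hk t.
  eapply Rle_trans. apply (Cnorm_sub_triangle _ _ (Dg j t)).
  rewrite (derivs_unique k _ Dg Dg' HDg HDg' j Hk t).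
  pose proof (B1 j Hj Hk t). pose proof (B2 j Hj Hk t).
  rewrite <- (derivs_unique k _ Dg Dg' HDg HDg' j Hk t) in *. lra.
Qed.

Lemma close_refl Phi k N eps f : in_Ck Phi k f -> 0 <= eps -> Ck_close Phi k N eps f f.
Proof.
  intros [D HD] He. exists D, D. split; auto. split; auto. intros j _ _ t.
  unfold Csub. rewrite !Rminus_diag. rewrite Cnorm_zero. auto.
Qed.

Lemma choice_nat {A : Type} (P : nat -> A -> Prop) : (forall j, exists x, P j x) -> exists F, forall j, P j (F j).
Proof.
  intros H. exists (fun j => proj1_sig (constructive_indefinite_description _ (H j))).
  intros j. destruct (constructive_indefinite_description _ (H j)); auto.
Qed.


Definition Bm (Phi : Cx -> Cx) (m : nat) (g : curve Phi -> Cx) : Prop :=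
  exists t0 a, Good (pullback Phi g) m t0 a.

Definition Um (Phi : Cx -> Cx) (k : ck_order) (m : nat) (f : curve Phi -> Cx) : Prop :=
  in_Ck Phi k f /\ exists N eps, 0 < eps /\
    forall g, in_Ck Phi k g -> Ck_close Phi k N eps f g -> ~ Bm Phi m g.

Lemma Um_open (Phi : Cx -> Cx) (k : ck_order) m : Ck_open Phi k (Um Phi k m).
Proof.
  intros f [Hf [N [eps [He H]]]]. split; auto. exists N, (eps / 2). split; [lra|].
  intros g Hg Hfg. split; auto. exists N, (eps / 2). split; [lra|].
  intros g' Hg' Hgg'. apply H; auto.
  replace eps with (eps / 2 + eps / 2) by field. eapply close_trans; eauto.
Qed.

Lemma Um_iff (Phi : Cx -> Cx) (k : ck_order) f : (in_Ck Phi k f /\ nowhere_real_analytic Phi f) <-> (forall m, Um Phi k m f).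
Proof.
  split.
  - intros [Hf Hna] m. split; auto.
    destruct (classic (exists N eps, 0 < eps /\
      forall g, in_Ck Phi k g -> Ck_close Phi k N eps f g -> ~ Bm Phi m g)) as [H|H]; auto.
    exfalso.
    assert (Hseq : forall j, exists g, in_Ck Phi k g /\ Ck_close Phi k 0 (/ INR (S j)) f g /\ Bm Phi m g).
    { intros j. apply NNPP. intros Hn. apply H. exists 0%nat, (/ INR (S j)). split.
      - apply Rinv_0_lt_compat, lt_0_INR; lia.
      - intros g Hg Hc Hb. apply Hn. exists g; auto. }
    apply choice_nat in Hseq. destruct Hseq as [G HG].
    assert (Hta : forall j, exists ta : R * (nat -> Cx), Good (pullback Phi (G j)) m (fst ta) (snd ta)).
    { intros j. destruct (HG j) as [_ [_ [t0 [a Ha]]]]. exists (t0, a). auto. }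
    apply choice_nat in Hta. destruct Hta as [TA HTA].
    destruct (closure_analytic Phi f m (fun j => fst (TA j)) (fun j => snd (TA j))
                (fun j => pullback Phi (G j)) HTA) as [t0 Ht0].
    + intros j t. destruct (HG j) as [_ [[Df [Dg [HDf [HDg Hb]]]] _]].
      specialize (Hb 0%nat (Nat.le_refl _) (le_order_0 k) t).
      destruct HDf as [Df0 _]. destruct HDg as [Dg0 _].
      rewrite Df0, Dg0 in Hb.
      split.
      * eapply Rle_trans; [|exact Hb]. apply (Cnorm_fst (Csub _ _)).
      * eapply Rle_trans; [|exact Hb]. apply (Cnorm_snd (Csub _ _)).
    + exact (Hna t0 Ht0).
  - intros H. destruct (H 0%nat) as [Hf _]. split; auto.
    intros t0 Han. destruct (analytic_to_good Phi f t0 Han) as [m [a Ha]].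
    destruct (H m) as [_ [N [eps [He Hu]]]].
    apply (Hu f Hf (close_refl Phi k N eps f Hf ltac:(lra))). exists t0, a. auto.
Qed.


Theorem theorem5p11 (Phi : Cx -> Cx) (rho Rr : R)
  (Hrho : 0 < rho) (Hrho1 : rho < 1) (HR : 1 < Rr)
  (Hhol : holomorphic_on_annulus Phi rho Rr)
  (Hinj : injective_on_annulus Phi rho Rr)
  (k : ck_order) :
  let S := fun f => in_Ck Phi k f /\ nowhere_real_analytic Phi f in
  Ck_dense Phi k S /\ Ck_Gdelta Phi k S.
Proof.
  intros S. split.
  - apply (density Phi rho Rr); auto.
  - exists (fun m => Um Phi k m). split.
    + intros m. apply Um_open.
    + intros f. apply Um_iff.
Qed.
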